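(* The $3$-uniform hypergraphs $O_R$ and $O_B$ are both opaque; i.e., the spectral ranking of $O_R$ differs from that of $\partial^*O_R$, and the spectral ranking of $O_B$ differs from that of $\partial^*O_B$. (Here $\partial^*O_R=\partial^*O_B$; in this multigraph the principal eigenvector takes equal values at $t$ and $b$, while the principal eigenvector $y$ of $O_R$ satisfies $y_t>y_b$.)
   Context: $O_R$ is the $3$-uniform hypergraph on vertex set $\{t,b,p,q,r,s,u\}$ with edges $\{t,p,q\},\{t,r,s\},\{b,q,r\},\{b,p,s\},\{u,p,q\}$; $O_B$ is the $3$-uniform hypergraph on the same vertex set with edges $\{t,p,r\},\{t,p,s\},\{b,p,q\},\{b,r,s\},\{u,p,q\}$. For a connected $k$-uniform hypergraph $H=([n],E)$, writing $x^e=\prod_{v\in e}x_v$, its principal eigenvector is the unique strictly positive $y$ with $\|y\|_k=1$ and $\rho\, y_i^{k-1}=\sum_{e\ni i}y^{e\setminus\{i\}}$ for all $i$, where $\rho=\max_{\|z\|_k^k=1}k\sum_{e\in E}z^e$. The clique-shadow $\partial^*H$ is the multigraph on the same vertices in which $\{u,v\}$ has multiplicity $\mu(uv)=|\{e\in E:u,v\in e\}|$; its principal eigenvector is the positive Perron eigenvector of its adjacency matrix (entries $\mu(uv)$), normalized to unit $2$-norm. The spectral ranking of a (hyper)graph is the ordering of its vertices by decreasing value of the principal eigenvector, tied vertices sharing a rank. A hypergraph is opaque if its spectral ranking differs from that of its clique-shadow. *)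

(* Defs.v *)
From HB Require Import structures.
From mathcomp Require Import all_boot all_order all_algebra.
From mathcomp Require Import reals.
Set Implicit Arguments. Unset Strict Implicit. Unset Printing Implicit Defensive.
Import Order.TTheory GRing.Theory Num.Theory.
Local Open Scope ring_scope.

Notation hypergraph n := (seq {set 'I_n}) (only parsing).

Section Spectral.
Variable R : realType.
Variables (n k : nat).

Definition monom (x : 'I_n -> R) (A : {set 'I_n}) : R := \prod_(v in A) x v.

Definition hform (E : hypergraph n) (z : 'I_n -> R) : R :=
  k%:R * \sum_(e <- E) monom z e.

Definition is_hspectral_radius (E : hypergraph n) (rho : R) : Prop :=
  (exists z : 'I_n -> R, \sum_i `|z i| ^+ k = 1 /\ hform E z = rho) /\
  (forall z : 'I_n -> R, \sum_i `|z i| ^+ k = 1 -> hform E z <= rho).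

Definition is_hyper_pev (E : hypergraph n) (y : 'I_n -> R) : Prop :=
  (forall i, 0 < y i) /\
  \sum_i y i ^+ k = 1 /\
  exists rho, is_hspectral_radius E rho /\
    forall i, rho * y i ^+ (k.-1) =
              \sum_(e <- E | i \in e) monom y (e :\ i).

(* multiplicity of the pair {u,v} (u <> v) in the clique-shadow; no loops *)
Definition shadow_mult (E : hypergraph n) (u v : 'I_n) : R :=
  if u == v then 0 else (count (fun e : {set 'I_n} => (u \in e) && (v \in e)) E)%:R.

Definition is_shadow_pev (E : hypergraph n) (z : 'I_n -> R) : Prop :=
  (forall i, 0 < z i) /\
  \sum_i z i ^+ 2 = 1 /\
  exists lambda : R, forall i,
    \sum_j shadow_mult E i j * z j = lambda * z i.

End Spectral.

(* Two vectors induce the same spectral ranking (ordering by decreasing value,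
   ties sharing a rank) iff they induce the same weak order on vertices. *)
Definition same_ranking (R : realType) (n : nat) (y z : 'I_n -> R) : Prop :=
  forall u v : 'I_n, (y u <= y v) = (z u <= z v).

Definition opaque (R : realType) (n k : nat) (E : hypergraph n) : Prop :=
  (exists y : 'I_n -> R, is_hyper_pev k E y) /\
  (exists z : 'I_n -> R, is_shadow_pev E z) /\
  (forall (y z : 'I_n -> R), is_hyper_pev k E y -> is_shadow_pev E z ->
     ~ same_ranking y z).

Definition vt : 'I_7 := @Ordinal 7 0 isT.
Definition vb : 'I_7 := @Ordinal 7 1 isT.
Definition vp : 'I_7 := @Ordinal 7 2 isT.
Definition vq : 'I_7 := @Ordinal 7 3 isT.
Definition vr : 'I_7 := @Ordinal 7 4 isT.
Definition vs : 'I_7 := @Ordinal 7 5 isT.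
Definition vu : 'I_7 := @Ordinal 7 6 isT.

Definition O_R : hypergraph 7 :=
  [:: [set vt; vp; vq]; [set vt; vr; vs]; [set vb; vq; vr];
      [set vb; vp; vs]; [set vu; vp; vq]].

Definition O_B : hypergraph 7 :=
  [:: [set vt; vp; vr]; [set vt; vp; vs]; [set vb; vp; vq];
      [set vb; vr; vs]; [set vu; vp; vq]].

(* Main.v *)
Require Import Defs.
From HB Require Import structures.
From mathcomp Require Import all_boot all_order all_algebra.
From mathcomp Require Import reals.
From mathcomp Require Import all_classical all_reals all_analysis.
From mathcomp Require Import ring lra.
Set Implicit Arguments. Unset Strict Implicit. Unset Printing Implicit Defensive.
Import Order.TTheory GRing.Theory Num.Theory.
Import numFieldTopology.Exports.
Local Open Scope classical_set_scope.
Local Open Scope ring_scope.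

Section Cont.
Variable R : realType.
Lemma cont_sum (s : seq 'I_7) (F : 'I_7 -> 'rV[R]_7 -> R) :
  (forall i, continuous (F i)) -> continuous (fun v => \sum_(i <- s) F i v).
Proof.
move=> Fc; elim: s => [|a s IH].
  under eq_fun do rewrite big_nil. exact: cst_continuous.
under eq_fun do rewrite big_cons.
by move=> x; apply: continuousD; [exact: Fc | exact: IH].
Qed.
Lemma cont_exp (h : 'rV[R]_7 -> R) n : continuous h -> continuous (fun v => h v ^+ n).
Proof.
move=> hc; elim: n => [|n IH].
  under eq_fun do rewrite expr0. exact: cst_continuous.
under eq_fun do rewrite exprS.
by move=> x; apply: (@continuousM _ _ h (fun v => h v ^+ n)); [exact: hc | exact: IH].
Qed.
End Cont.

Lemma exists_max (R : realType) (k : nat) (f : ('I_7 -> R) -> R) :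
  (0 < k)%N ->
  continuous (fun v : 'rV[R]_7 => f (fun i => v ord0 i)) ->
  exists y : 'I_7 -> R, (forall i, 0 <= y i) /\ \sum_i y i ^+ k = 1 /\
    (forall w, (forall i, 0 <= w i) -> \sum_i w i ^+ k = 1 -> f w <= f y).
Proof.
move=> k0 fc.
pose g := fun v : 'rV[R]_7 => \sum_i v ord0 i ^+ k.
have gc : continuous g.
  apply: cont_sum => i; apply: cont_exp; exact: coord_continuous.
pose A := [set v : 'rV[R]_7 | forall i, `[(0:R), 1]%classic (v ord0 i)] `&` (g @^-1` [set 1]).
have cA : compact A.
  apply: compact_closedI; first by apply: (@rV_compact _ _ (fun=> `[(0:R), 1]%classic)) => _; exact: segment_compact.
  apply: preimage_closed; last exact: closed_eq.
  by move=> x _; exact: gc.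
have A0 : A !=set0.
  exists (\row_i (i == ord0)%:R); split.
    move=> i /=; rewrite mxE in_itv /=; case: (i == ord0) => /=; rewrite ?lexx ?ler01 //=.
  rewrite /preimage /g /= (bigD1 ord0) //= mxE eqxx expr1n big1 ?addr0 // => i /negbTE; rewrite mxE => ->.
  by rewrite expr0n; move: k0; clear; case: k.
have [c cA' cmax] := EVT_max_rV A0 cA (continuous_subspaceT fc).
move: cA'; rewrite inE => -[cbox cg].
exists (fun i => c ord0 i); split; first by move=> i; have := cbox i; rewrite /= in_itv /= => /andP[].
split; first exact: cg.
move=> w w0 w1.
have := cmax (\row_i w i).
have -> : (fun i => (\row_i0 w i0) ord0 i) = w by apply: funext => i; rewrite mxE.
apply; rewrite inE; split.
  move=> i /=; rewrite mxE in_itv /= w0 /=.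
  rewrite leNgt; apply/negP => wi1.
  have : w i ^+ k <= 1.
    rewrite -w1 (bigD1 i) //= lerDl; apply: sumr_ge0 => j _; exact: exprn_ge0.
  by rewrite leNgt exprn_egt1 // -lt0n k0.
by rewrite /g /=; under eq_bigr do rewrite mxE.
Qed.

From mathcomp Require Import ring lra.

Section Gen.
Variable R : realType.
Implicit Types (y z w : 'I_7 -> R).

Definition pert y (i : 'I_7) (e : R) : 'I_7 -> R :=
  fun v => y v + (if v == i then e else 0).
Definition sc (c : R) z : 'I_7 -> R := fun v => c * z v.

Lemma kroot (k : nat) (a : R) : (0 < k)%N -> 0 <= a -> exists r, 0 <= r /\ r ^+ k = a.
Proof.
move=> k0 a0.
have kn0 : (k == 0%N) = false by rewrite eqn0Ngt k0.
have a1 : 0 <= a + 1 by rewrite addr_ge0.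
have [|r /andP[r0 _] rr] := @poly_ivt _ ('X^k - a%:P) 0 (a + 1) a1.
  rewrite !hornerE expr0n kn0 /= sub0r oppr_le0 a0 /= subr_ge0.
  by rewrite (le_trans _ (ler_eXnr _ _)) ?lerDl ?lerDr.
by exists r; split => //; move: rr; rewrite rootE !hornerE subr_eq0 => /eqP.
Qed.

Lemma argmax7 (F : 'I_7 -> R) : exists m, forall j, F j <= F m.
Proof.
case: (@arg_maxP _ _ _ vt xpredT F isT) => m _ H.
by exists m => j; apply: H.
Qed.

Lemma eps_le (D K b : R) : 0 <= K -> 0 < b ->
  (forall e, 0 < e -> e <= b -> D <= e * K) -> D <= 0.
Proof.
move=> K0 b0 H; rewrite leNgt; apply/negP => D0.
pose e := Num.min b (D / (K + 1)).
have K1 : 0 < K + 1 by rewrite ltr_pwDr.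
have e0 : 0 < e by rewrite lt_min b0 divr_gt0.
have eb : e <= b by rewrite ge_min lexx.
have := H e e0 eb.
have eD : e <= D / (K + 1) by rewrite ge_min lexx orbT.
have : e * K < D.
  apply: (le_lt_trans (y := D / (K + 1) * K)); first by rewrite ler_wpM2r.
  by rewrite mulrAC ltr_pdivrMr // mulrDr mulr1 ltrDl.
by move=> h1 h2; move: (lt_le_trans h1 h2); rewrite ltxx.
Qed.

Lemma sum_pert (k : nat) y i e :
  \sum_v (pert y i e v) ^+ k = \sum_v y v ^+ k + ((y i + e) ^+ k - y i ^+ k).
Proof.
rewrite (bigD1 i) //= [in RHS](bigD1 i) //= /pert eqxx.
rewrite (eq_bigr (fun v => y v ^+ k)); last by move=> v /negbTE ->; rewrite addr0.
ring.
Qed.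

Lemma pert_ne y i e v : v != i -> pert y i e v = y v.
Proof. by move=> /negbTE h; rewrite /pert h addr0. Qed.

Lemma sum_sc (k : nat) c z : \sum_v (sc c z v) ^+ k = c ^+ k * \sum_v z v ^+ k.
Proof. by rewrite mulr_sumr; apply: eq_bigr => v _; rewrite /sc exprMn. Qed.

Definition maxcond (k : nat) (f : ('I_7 -> R) -> R) y :=
  forall w, (forall i, 0 <= w i) -> f w <= f y * \sum_v w v ^+ k.

Lemma maxcond_of (k : nat) (f : ('I_7 -> R) -> R) y : (0 < k)%N ->
  (forall c z, f (sc c z) = c ^+ k * f z) ->
  (forall w, (forall i, 0 <= w i) -> \sum_v w v ^+ k = 1 -> f w <= f y) ->
  maxcond k f y.
Proof.
move=> k0 fh H w w0.
have kn0 : (k == 0%N) = false by rewrite eqn0Ngt k0.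
have s0 : 0 <= \sum_v w v ^+ k by apply: sumr_ge0 => v _; rewrite exprn_ge0.
case: (ltrgt0P (\sum_v w v ^+ k)) => [sp||se]; last 2 first.
- by move=> sn; move: s0; rewrite leNgt sn.
- have wz : w = sc 0 w.
    apply: funext => v; rewrite /sc mul0r.
    have : w v ^+ k <= 0.
      rewrite -se (bigD1 v) //= lerDl sumr_ge0 // => j _; exact: exprn_ge0.
    move=> h; apply/eqP; have := expf_eq0 (w v) k; rewrite k0 /= => <-.
    by rewrite eq_le h exprn_ge0.
  by rewrite se mulr0 wz fh expr0n kn0 /= mul0r.
have [r [r0 rk]] := kroot k0 s0.
have rp : 0 < r.
  rewrite lt_def r0 andbT; apply/negP => /eqP rz; move: sp; rewrite -rk rz expr0n kn0 /=.
  by rewrite ltxx.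
have := H (sc r^-1 w).
rewrite fh sum_sc exprVn rk mulVf ?gt_eqF //.
have : forall i, 0 <= sc r^-1 w i by move=> i; rewrite /sc mulr_ge0 // invr_ge0.
move=> h /(_ h erefl) le1.
by move: le1; rewrite mulrC ler_pdivrMr.
Qed.


Lemma le_ring (a b c d : R) : b - a = d - c -> a <= b -> c <= d.
Proof. by move=> e; rewrite -subr_ge0 e subr_ge0. Qed.

Lemma foc3 (f : ('I_7 -> R) -> R) (G : 'I_7 -> ('I_7 -> R) -> R) y i :
  (forall y i e, f (pert y i e) = f y + e * G i y) ->
  (forall i, 0 <= y i) -> \sum_v y v ^+ 3 = 1 -> 0 <= f y -> maxcond 3 f y ->
  G i y <= 3%:R * f y * y i ^+ 2 /\ (0 < y i -> G i y = 3%:R * f y * y i ^+ 2).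
Proof.
move=> fp y0 y1 F0 mc.
set F := f y.
have up : G i y <= 3%:R * F * y i ^+ 2.
  rewrite -subr_le0; apply: (@eps_le _ (F * (3%:R * y i + 1)) 1) => //.
    by rewrite mulr_ge0 // addr_ge0 // mulr_ge0.
  move=> e e0 e1.
  have w0 : forall v, 0 <= pert y i e v.
    by move=> v; rewrite /pert; case: (v == i); rewrite ?addr0 // addr_ge0 // ltW.
  have := mc _ w0; rewrite fp sum_pert y1 -/F => h.
  have yi0 := y0 i.
  have h' : e * (G i y - 3%:R * F * y i ^+ 2) <= e * (e * (F * (3%:R * y i + e))).
    by apply: (le_ring _ h); ring.
  rewrite -(ler_pM2l e0); apply: (le_trans h'); rewrite ler_pM2l // ler_pM2l //.
  by rewrite ler_wpM2l // lerD2l.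
split => // yp.
apply/eqP; rewrite eq_le up /= -subr_le0.
apply: (@eps_le _ (3%:R * F * y i) (y i)) => //.
  by rewrite mulr_ge0 // mulr_ge0.
move=> e e0 e1.
have w0 : forall v, 0 <= pert y i (- e) v.
  move=> v; rewrite /pert; case: eqP => [->|]; rewrite ?addr0 //; by rewrite subr_ge0.
have := mc _ w0; rewrite fp sum_pert y1 -/F => h.
have yi0 := y0 i.
have h' : e * (3%:R * F * y i ^+ 2 - G i y) <= e * (e * (3%:R * F * y i - F * e)).
  by apply: (le_ring _ h); ring.
rewrite -(ler_pM2l e0); apply: (le_trans h'); rewrite ler_pM2l // ler_pM2l //.
by rewrite lerBlDr lerDl mulr_ge0 // ltW.
Qed.

Lemma foc2 (f : ('I_7 -> R) -> R) (G : 'I_7 -> ('I_7 -> R) -> R) y i :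
  (forall y i e, f (pert y i e) = f y + e * G i y) ->
  (forall i, 0 <= y i) -> \sum_v y v ^+ 2 = 1 -> 0 <= f y -> maxcond 2 f y ->
  G i y <= 2%:R * f y * y i /\ (0 < y i -> G i y = 2%:R * f y * y i).
Proof.
move=> fp y0 y1 F0 mc.
set F := f y.
have up : G i y <= 2%:R * F * y i.
  rewrite -subr_le0; apply: (@eps_le _ F 1) => //.
  move=> e e0 e1.
  have w0 : forall v, 0 <= pert y i e v.
    by move=> v; rewrite /pert; case: (v == i); rewrite ?addr0 // addr_ge0 // ltW.
  have := mc _ w0; rewrite fp sum_pert y1 -/F => h.
  have h' : e * (G i y - 2%:R * F * y i) <= e * (e * F).
    by apply: (le_ring _ h); ring.
  by rewrite -(ler_pM2l e0).
split => // yp.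
apply/eqP; rewrite eq_le up /= -subr_le0.
apply: (@eps_le _ F (y i)) => //.
move=> e e0 e1.
have w0 : forall v, 0 <= pert y i (- e) v.
  move=> v; rewrite /pert; case: eqP => [->|]; rewrite ?addr0 //; by rewrite subr_ge0.
have := mc _ w0; rewrite fp sum_pert y1 -/F => h.
have h' : e * (2%:R * F * y i - G i y) <= e * (e * F).
  by apply: (le_ring _ h); ring.
by rewrite -(ler_pM2l e0).
Qed.

Lemma soc3 (f : ('I_7 -> R) -> R) (G : 'I_7 -> ('I_7 -> R) -> R) y a b H :
  (forall i, 0 <= y i) -> \sum_v y v ^+ 3 = 1 -> 0 <= f y -> maxcond 3 f y ->
  a != b -> y a = 0 -> y b = 0 -> G a y = 0 -> G b y = 0 ->
  (forall e, f (pert (pert y a e) b e) = f y + e * (G a y + G b y) + e ^+ 2 * H) ->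
  H <= 0.
Proof.
move=> y0 y1 F0 mc ab ya yb Ga Gb fp.
apply: (@eps_le _ (2%:R * f y) 1) => //; first by rewrite mulr_ge0.
move=> e e0 e1.
have w0 : forall v, 0 <= pert (pert y a e) b e v.
  move=> v; rewrite /pert; case: (v == b); case: (v == a); rewrite ?addr0 //;
  by rewrite ?addr_ge0 // ltW.
have := mc _ w0; rewrite fp !sum_pert y1 pert_ne 1?eq_sym // ya yb Ga Gb => h.
have h' : e ^+ 2 * H <= e ^+ 2 * (e * (2%:R * f y)).
  by apply: (le_ring _ h); ring.
by rewrite -(ler_pM2l (exprn_gt0 2 e0)).
Qed.

Lemma hyper_exists (E : hypergraph 7) (f : ('I_7 -> R) -> R) (G : 'I_7 -> ('I_7 -> R) -> R) :
  (forall z, hform 3 E z = 3%:R * f z) ->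
  (forall i y, \sum_(e <- E | i \in e) monom y (e :\ i) = G i y) ->
  continuous (fun v : 'rV[R]_7 => f (fun i => v ord0 i)) ->
  (forall c z, f (sc c z) = c ^+ 3 * f z) ->
  (forall y i e, f (pert y i e) = f y + e * G i y) ->
  (forall z, f z <= f (fun i => `|z i|)) ->
  (forall z, (forall i, 0 <= z i) -> 0 <= f z) ->
  (forall y, (forall i, 0 <= y i) -> \sum_i y i ^+ 3 = 1 -> maxcond 3 f y -> forall i, 0 < y i) ->
  exists y, is_hyper_pev 3 E y.
Proof.
move=> hE gE fc fh fp fabs fnn Hpos.
have [y [y0 [y1 ym]]] := @exists_max R 3 f isT fc.
have mc := @maxcond_of 3 f y isT fh ym.
have yp := Hpos y y0 y1 mc.
exists y; split => //; split => //; exists (3%:R * f y); split.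
  split.
    exists y; split; last exact: hE.
    by rewrite -y1; apply: eq_bigr => i _; rewrite ger0_norm.
  move=> z z1; rewrite hE ler_pM2l ?ltr0n //.
  apply: (le_trans (fabs z)).
  have := mc (fun i => `|z i|) (fun i => normr_ge0 _); rewrite z1 mulr1 //.
move=> i; rewrite gE /=.
by have [_ ->] := foc3 i fp y0 y1 (fnn _ y0) mc.
Qed.

Lemma shadow_exists (E : hypergraph 7) (f : ('I_7 -> R) -> R) (G : 'I_7 -> ('I_7 -> R) -> R) :
  (forall i z, \sum_j shadow_mult R E i j * z j = G i z) ->
  continuous (fun v : 'rV[R]_7 => f (fun i => v ord0 i)) ->
  (forall c z, f (sc c z) = c ^+ 2 * f z) ->
  (forall y i e, f (pert y i e) = f y + e * G i y) ->
  (forall z, (forall i, 0 <= z i) -> 0 <= f z) ->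
  (forall y, (forall i, 0 <= y i) -> \sum_i y i ^+ 2 = 1 ->
     (forall i, G i y <= 2%:R * f y * y i) -> forall i, 0 < y i) ->
  exists z, is_shadow_pev E z.
Proof.
move=> gE fc fh fp fnn Hpos.
have [y [y0 [y1 ym]]] := @exists_max R 2 f isT fc.
have mc := @maxcond_of 2 f y isT fh ym.
have yp : forall i, 0 < y i.
  apply: Hpos => // i; by have [] := foc2 i fp y0 y1 (fnn _ y0) mc.
exists y; split => //; split => //; exists (2%:R * f y) => i.
by rewrite gE; have [_ ->] := foc2 i fp y0 y1 (fnn _ y0) mc.
Qed.


Lemma tri_abs (a b c : R) : a * b * c <= `|a| * `|b| * `|c|.
Proof. by rewrite -!normrM ler_norm. Qed.

Lemma pl (M ya yb xa xb : R) : 0 <= ya -> ya <= M * xa -> 0 <= yb -> yb <= M * xb ->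
  ya * yb <= M ^+ 2 * (xa * xb).
Proof.
move=> a0 a1 b0 b1; rewrite (_ : M ^+ 2 * (xa * xb) = (M * xa) * (M * xb)); last by ring.
apply: ler_pM => //.
Qed.

Lemma hstep (M ym bm rho L xj xk yj yk Gx Gy bj : R) :
  0 < M -> 0 < xk -> 0 <= yj -> 0 <= yk -> yk <= M * xk -> 0 <= bm -> M * bm <= ym ->
  L <= rho -> 0 <= L ->
  rho * ym ^+ 2 = Gy -> M ^+ 2 * (xj * xk) - yj * yk <= M ^+ 2 * Gx - Gy ->
  bj * xk + Gx - L * bm ^+ 2 <= xj * xk -> M * bj <= yj.
Proof.
move=> M0 xk0 yj0 yk0 ykM bm0 ymM Lr L0 eG hG num.
have Mb0 : 0 <= M * bm by rewrite mulr_ge0 // ltW.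
have h1 : (M * bm) ^+ 2 <= ym ^+ 2.
  by rewrite !expr2 ler_pM // (le_trans Mb0 ymM).
have h2 : L * (M * bm) ^+ 2 <= Gy.
  by rewrite -eG; apply: (le_trans (ler_wpM2l L0 h1)); apply: ler_wpM2r => //; rewrite sqr_ge0.
have h3 : M ^+ 2 * (bj * xk) <= yj * yk.
  have : M ^+ 2 * (bj * xk + Gx - L * bm ^+ 2) <= M ^+ 2 * (xj * xk).
    by rewrite ler_wpM2l // exprn_ge0 // ltW.
  move=> h; rewrite -subr_ge0.
  have e : yj * yk - M ^+ 2 * (bj * xk) =
    (M ^+ 2 * (xj * xk) - M ^+ 2 * (bj * xk + Gx - L * bm ^+ 2)) + (Gy - L * (M * bm) ^+ 2)
    + (M ^+ 2 * Gx - Gy - (M ^+ 2 * (xj * xk) - yj * yk)) by ring.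
  rewrite e; apply: addr_ge0; first apply: addr_ge0.
  - by rewrite subr_ge0.
  - by rewrite subr_ge0.
  - by rewrite subr_ge0.
have h4 : yj * yk <= yj * (M * xk) by rewrite ler_wpM2l.
have h5 : (M * xk) * (M * bj) <= (M * xk) * yj.
  apply: (le_trans _ (_ : yj * yk <= _)); last by rewrite [_ * yj]mulrC.
  apply: le_trans h3; rewrite (_ : M * xk * (M * bj) = M ^+ 2 * (bj * xk)) //; ring.
by rewrite ler_pM2l ?mulr_gt0 in h5.
Qed.

Lemma sstep (M zm bm lam L xk zk Gx Gy bk A : R) :
  0 < M -> 0 < A -> 0 <= bm -> M * bm <= zm -> L <= lam -> 0 <= L ->
  Gy = lam * zm -> A * (M * xk - zk) <= M * Gx - Gy ->
  A * bk + Gx - L * bm <= A * xk -> M * bk <= zk.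
Proof.
move=> M0 A0 bm0 zmM Lr L0 eG hG num.
have zm0 : 0 <= zm by apply: le_trans zmM; rewrite mulr_ge0 // ltW.
have h2 : L * (M * bm) <= Gy.
  rewrite eG; apply: (le_trans (ler_wpM2l L0 zmM)); rewrite ler_wpM2r //.
have h3 : A * (M * bk) <= A * zk.
  have : M * (A * bk + Gx - L * bm) <= M * (A * xk) by rewrite ler_wpM2l // ltW.
  move=> h; rewrite -subr_ge0.
  have e : A * zk - A * (M * bk) =
     (M * (A * xk) - M * (A * bk + Gx - L * bm)) + (Gy - L * (M * bm)) +
     (M * Gx - Gy - A * (M * xk - zk)) by ring.
  rewrite e; apply: addr_ge0; first apply: addr_ge0; by rewrite subr_ge0.
by rewrite ler_pM2l in h3.
Qed.

Lemma rho_lb (E : hypergraph 7) (f : ('I_7 -> R) -> R) rho x :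
  (forall z, hform 3 E z = 3%:R * f z) ->
  (forall c z, f (sc c z) = c ^+ 3 * f z) ->
  is_hspectral_radius 3 E rho -> (forall i, 0 < x i) ->
  3%:R * f x <= rho * \sum_i x i ^+ 3.
Proof.
move=> hE fh [_ hs] x0.
have sp : 0 < \sum_i x i ^+ 3.
  rewrite (bigD1 vt) //= ltr_pwDl ?exprn_gt0 // sumr_ge0 // => i _.
  by rewrite exprn_ge0 // ltW.
have [r [r0 r3]] := @kroot 3 _ isT (ltW sp).
have rp : 0 < r.
  rewrite lt_def r0 andbT; apply/negP => /eqP rz; move: sp; rewrite -r3 rz expr0n /=.
  by rewrite ltxx.
have := hs (sc r^-1 x).
rewrite hE fh.
have -> : \sum_i `|sc r^-1 x i| ^+ 3 = 1.
  rewrite (eq_bigr (fun i => sc r^-1 x i ^+ 3)); last first.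
    by move=> i _; rewrite ger0_norm // /sc mulr_ge0 // ?invr_ge0 // ltW.
  by rewrite sum_sc -r3 exprVn mulVf // expf_eq0 /= gt_eqF.
move=> /(_ erefl) h.
have ri : 0 < r^-1 ^+ 3 by rewrite exprn_gt0 // invr_gt0.
rewrite -r3 -(ler_pM2l ri).
apply: (le_trans _ (_ : rho <= _)).
  by rewrite mulrCA.
by rewrite mulrCA exprVn mulVf ?mulr1 // expf_eq0 /= gt_eqF.
Qed.

Lemma edge_zero (f : ('I_7 -> R) -> R) (G : 'I_7 -> ('I_7 -> R) -> R) y a b c
  (Ra Rb Rc Sab Sac : R) :
  (forall i, 0 <= y i) -> \sum_v y v ^+ 3 = 1 -> 0 <= f y -> maxcond 3 f y ->
  a != b -> a != c ->
  (forall i, y i = 0 -> G i y = 0) ->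
  G a y = y b * y c + Ra -> 0 <= Ra ->
  (forall e, f (pert (pert y a e) b e) = f y + e * (G a y + G b y) + e ^+ 2 * (y c + Sab)) -> 0 <= Sab ->
  (forall e, f (pert (pert y a e) c e) = f y + e * (G a y + G c y) + e ^+ 2 * (y b + Sac)) -> 0 <= Sac ->
  y a = 0 -> y b = 0 /\ y c = 0.
Proof.
move=> y0 y1 F0 mc ab ac Gz Ga Ra0 pab Sab0 pac Sac0 ya.
have Ga0 := Gz _ ya.
have : y b * y c = 0.
  have h : y b * y c + Ra = 0 by rewrite -Ga Ga0.
  have h0 : 0 <= y b * y c by rewrite mulr_ge0.
  apply/eqP; rewrite eq_le h0 andbT; lra.
move=> /eqP; rewrite mulf_eq0 => /orP[/eqP yb|/eqP yc].
  have := soc3 y0 y1 F0 mc ab ya yb Ga0 (Gz _ yb) pab => h.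
  split => //; apply/eqP; rewrite eq_le y0 andbT.
  by apply: le_trans h; rewrite lerDl.
have := soc3 y0 y1 F0 mc ac ya yc Ga0 (Gz _ yc) pac => h.
split => //; apply/eqP; rewrite eq_le y0 andbT.
by apply: le_trans h; rewrite lerDl.
Qed.

Lemma ord7P (P : 'I_7 -> Prop) : P vt -> P vb -> P vp -> P vq -> P vr -> P vs -> P vu ->
  forall i, P i.
Proof.
move=> ht hb hp hq hr hs hu [[|[|[|[|[|[|[|n]]]]]]] Hi] //.
- by rewrite (_ : Ordinal Hi = vt) //; apply: val_inj.
- by rewrite (_ : Ordinal Hi = vb) //; apply: val_inj.
- by rewrite (_ : Ordinal Hi = vp) //; apply: val_inj.
- by rewrite (_ : Ordinal Hi = vq) //; apply: val_inj.
- by rewrite (_ : Ordinal Hi = vr) //; apply: val_inj.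
- by rewrite (_ : Ordinal Hi = vs) //; apply: val_inj.
- by rewrite (_ : Ordinal Hi = vu) //; apply: val_inj.
Qed.

Lemma prod7 (F : 'I_7 -> R) : \prod_(i < 7) F i = F vt * F vb * F vp * F vq * F vr * F vs * F vu.
Proof.
rewrite !big_ord_recr big_ord0 /= mul1r.
by congr ((_ * _ * _ * _ * _ * _ * _ : R)); congr F; apply: val_inj.
Qed.
Lemma sum7 (F : 'I_7 -> R) : \sum_(i < 7) F i = F vt + F vb + F vp + F vq + F vr + F vs + F vu.
Proof.
rewrite !big_ord_recr big_ord0 /= add0r.
by congr ((_ + _ + _ + _ + _ + _ + _ : R)); congr F; apply: val_inj.
Qed.
Lemma monomE (z : 'I_7 -> R) A : monom z A = \prod_(i < 7) (if i \in A then z i else 1).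
Proof. by rewrite /monom big_mkcond. Qed.


Lemma cD (F1 F2 : 'rV[R]_7 -> R) : continuous F1 -> continuous F2 ->
  continuous (fun v => F1 v + F2 v).
Proof. by move=> h1 h2 x; apply: continuousD; [exact: h1 | exact: h2]. Qed.
Lemma cM (F1 F2 : 'rV[R]_7 -> R) : continuous F1 -> continuous F2 ->
  continuous (fun v => F1 v * F2 v).
Proof. by move=> h1 h2 x; apply: (@continuousM _ _ F1 F2); [exact: h1 | exact: h2]. Qed.
Lemma cC (i : 'I_7) : continuous (fun v : 'rV[R]_7 => v ord0 i).
Proof. exact: coord_continuous. Qed.

Lemma allzero_contra (k : nat) y : (0 < k)%N -> \sum_i y i ^+ k = 1 -> (forall i, y i = 0) -> False.
Proof.
move=> k0 y1 h; move: y1; rewrite big1 => [/eqP|i _]; first by rewrite eq_sym oner_eq0.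
by rewrite h expr0n eqn0Ngt k0.
Qed.

Lemma nb_zero (G yb m Rest : R) : G <= 0 -> G = m * yb + Rest -> 0 < m -> 0 <= yb -> 0 <= Rest -> yb = 0.
Proof.
move=> G0 eG m0 yb0 R0; apply/eqP; rewrite eq_le yb0 andbT.
have : m * yb <= 0 by lra.
by rewrite pmulr_rle0.
Qed.

End Gen.

Ltac contt := repeat first [ apply: cD | apply: cM | apply: cC ].
Ltac nnt H := repeat match goal with
   | |- is_true (0 <= _ + _) => apply: addr_ge0
   | |- is_true (0 <= _ * _) => apply: mulr_ge0
   | |- is_true (0 <= 0) => exact: lexx
   | |- is_true (0 <= _%:R) => exact: ler0n
   | |- is_true (0 <= ?f ?i) => exact: (H i)
 end.

Section Inst.
Variable R : realType.
Definition fR (z : 'I_7 -> R) : R := z vt * z vp * z vq + z vt * z vr * z vs + z vb * z vq * z vr + z vb * z vp * z vs + z vu * z vp * z vq.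
Definition GR (i : 'I_7) (z : 'I_7 -> R) : R := nth 0 [:: (z vp * z vq + z vr * z vs); (z vq * z vr + z vp * z vs); (z vt * z vq + z vb * z vs + z vu * z vq); (z vt * z vp + z vb * z vr + z vu * z vp); (z vt * z vs + z vb * z vq); (z vt * z vr + z vb * z vp); (z vp * z vq)] i.

Lemma hR (z : 'I_7 -> R) : hform 3 O_R z = 3%:R * fR z.
Proof. rewrite /hform /O_R !big_cons big_nil !monomE !prod7 !inE /= /fR. ring. Qed.

Lemma gR (y : 'I_7 -> R) i : \sum_(e <- O_R | i \in e) monom y (e :\ i) = GR i y.
Proof. by move: i; apply: ord7P; rewrite /O_R !big_cons big_nil !inE /= !monomE !prod7 !inE /= /GR /=; ring. Qed.

Lemma cR : continuous (fun v : 'rV[R]_7 => fR (fun i => v ord0 i)).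
Proof. rewrite /fR; contt. Qed.

Lemma fhR c z : fR (sc c z) = c ^+ 3 * fR z.
Proof. rewrite /fR /sc; ring. Qed.

Lemma fpR y i e : fR (pert y i e) = fR y + e * GR i y.
Proof. by move: i; apply: ord7P; rewrite /fR /GR /pert /=; ring. Qed.

Lemma fabsR z : fR z <= fR (fun i => `|z i|).
Proof. rewrite /fR; repeat apply: lerD; apply: tri_abs. Qed.

Lemma fnnR z : (forall i, 0 <= z i) -> 0 <= fR z.
Proof. move=> z0; rewrite /fR; nnt z0. Qed.

Lemma GnnR y : (forall i, 0 <= y i) -> forall i, 0 <= GR i y.
Proof. move=> y0; apply: ord7P; rewrite /GR /=; nnt y0. Qed.

Lemma posR y : (forall i, 0 <= y i) -> \sum_i y i ^+ 3 = 1 -> maxcond 3 fR y -> forall i, 0 < y i.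
Proof.
move=> y0 y1 mc.
have F0 := fnnR y0.
have Gz : forall i, y i = 0 -> GR i y = 0.
  move=> i yi; have [h _] := foc3 i (@fpR) y0 y1 F0 mc.
  apply/eqP; rewrite eq_le GnnR // andbT; by rewrite yi expr0n mulr0 in h.
have Z1 : y vt = 0 -> y vp = 0 /\ y vq = 0.
  have e1 : GR vt y = y vp * y vq + (y vr * y vs) by rewrite /GR /=; ring.
  have e2 : 0 <= (y vr * y vs) by nnt y0.
  have e3 : forall e, fR (pert (pert y vt e) vp e) = fR y + e * (GR vt y + GR vp y) + e ^+ 2 * (y vq + ((0 : R))).
    by move=> e; rewrite /fR /GR /pert /=; ring.
  have e4 : 0 <= ((0 : R)) by nnt y0.
  have e5 : forall e, fR (pert (pert y vt e) vq e) = fR y + e * (GR vt y + GR vq y) + e ^+ 2 * (y vp + ((0 : R))).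
    by move=> e; rewrite /fR /GR /pert /=; ring.
  have e6 : 0 <= ((0 : R)) by nnt y0.
  exact: (edge_zero (a := vt) (b := vp) (c := vq) 0 0 y0 y1 F0 mc isT isT Gz e1 e2 e3 e4 e5 e6).
have Z2 : y vp = 0 -> y vq = 0 /\ y vt = 0.
  have e1 : GR vp y = y vq * y vt + (y vb * y vs + y vu * y vq) by rewrite /GR /=; ring.
  have e2 : 0 <= (y vb * y vs + y vu * y vq) by nnt y0.
  have e3 : forall e, fR (pert (pert y vp e) vq e) = fR y + e * (GR vp y + GR vq y) + e ^+ 2 * (y vt + (y vu)).
    by move=> e; rewrite /fR /GR /pert /=; ring.
  have e4 : 0 <= (y vu) by nnt y0.
  have e5 : forall e, fR (pert (pert y vp e) vt e) = fR y + e * (GR vp y + GR vt y) + e ^+ 2 * (y vq + ((0 : R))).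
    by move=> e; rewrite /fR /GR /pert /=; ring.
  have e6 : 0 <= ((0 : R)) by nnt y0.
  exact: (edge_zero (a := vp) (b := vq) (c := vt) 0 0 y0 y1 F0 mc isT isT Gz e1 e2 e3 e4 e5 e6).
have Z3 : y vq = 0 -> y vt = 0 /\ y vp = 0.
  have e1 : GR vq y = y vt * y vp + (y vb * y vr + y vu * y vp) by rewrite /GR /=; ring.
  have e2 : 0 <= (y vb * y vr + y vu * y vp) by nnt y0.
  have e3 : forall e, fR (pert (pert y vq e) vt e) = fR y + e * (GR vq y + GR vt y) + e ^+ 2 * (y vp + ((0 : R))).
    by move=> e; rewrite /fR /GR /pert /=; ring.
  have e4 : 0 <= ((0 : R)) by nnt y0.
  have e5 : forall e, fR (pert (pert y vq e) vp e) = fR y + e * (GR vq y + GR vp y) + e ^+ 2 * (y vt + (y vu)).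
    by move=> e; rewrite /fR /GR /pert /=; ring.
  have e6 : 0 <= (y vu) by nnt y0.
  exact: (edge_zero (a := vq) (b := vt) (c := vp) 0 0 y0 y1 F0 mc isT isT Gz e1 e2 e3 e4 e5 e6).
have Z4 : y vt = 0 -> y vr = 0 /\ y vs = 0.
  have e1 : GR vt y = y vr * y vs + (y vp * y vq) by rewrite /GR /=; ring.
  have e2 : 0 <= (y vp * y vq) by nnt y0.
  have e3 : forall e, fR (pert (pert y vt e) vr e) = fR y + e * (GR vt y + GR vr y) + e ^+ 2 * (y vs + ((0 : R))).
    by move=> e; rewrite /fR /GR /pert /=; ring.
  have e4 : 0 <= ((0 : R)) by nnt y0.
  have e5 : forall e, fR (pert (pert y vt e) vs e) = fR y + e * (GR vt y + GR vs y) + e ^+ 2 * (y vr + ((0 : R))).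
    by move=> e; rewrite /fR /GR /pert /=; ring.
  have e6 : 0 <= ((0 : R)) by nnt y0.
  exact: (edge_zero (a := vt) (b := vr) (c := vs) 0 0 y0 y1 F0 mc isT isT Gz e1 e2 e3 e4 e5 e6).
have Z5 : y vr = 0 -> y vs = 0 /\ y vt = 0.
  have e1 : GR vr y = y vs * y vt + (y vb * y vq) by rewrite /GR /=; ring.
  have e2 : 0 <= (y vb * y vq) by nnt y0.
  have e3 : forall e, fR (pert (pert y vr e) vs e) = fR y + e * (GR vr y + GR vs y) + e ^+ 2 * (y vt + ((0 : R))).
    by move=> e; rewrite /fR /GR /pert /=; ring.
  have e4 : 0 <= ((0 : R)) by nnt y0.
  have e5 : forall e, fR (pert (pert y vr e) vt e) = fR y + e * (GR vr y + GR vt y) + e ^+ 2 * (y vs + ((0 : R))).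
    by move=> e; rewrite /fR /GR /pert /=; ring.
  have e6 : 0 <= ((0 : R)) by nnt y0.
  exact: (edge_zero (a := vr) (b := vs) (c := vt) 0 0 y0 y1 F0 mc isT isT Gz e1 e2 e3 e4 e5 e6).
have Z6 : y vs = 0 -> y vt = 0 /\ y vr = 0.
  have e1 : GR vs y = y vt * y vr + (y vb * y vp) by rewrite /GR /=; ring.
  have e2 : 0 <= (y vb * y vp) by nnt y0.
  have e3 : forall e, fR (pert (pert y vs e) vt e) = fR y + e * (GR vs y + GR vt y) + e ^+ 2 * (y vr + ((0 : R))).
    by move=> e; rewrite /fR /GR /pert /=; ring.
  have e4 : 0 <= ((0 : R)) by nnt y0.
  have e5 : forall e, fR (pert (pert y vs e) vr e) = fR y + e * (GR vs y + GR vr y) + e ^+ 2 * (y vt + ((0 : R))).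
    by move=> e; rewrite /fR /GR /pert /=; ring.
  have e6 : 0 <= ((0 : R)) by nnt y0.
  exact: (edge_zero (a := vs) (b := vt) (c := vr) 0 0 y0 y1 F0 mc isT isT Gz e1 e2 e3 e4 e5 e6).
have Z7 : y vb = 0 -> y vq = 0 /\ y vr = 0.
  have e1 : GR vb y = y vq * y vr + (y vp * y vs) by rewrite /GR /=; ring.
  have e2 : 0 <= (y vp * y vs) by nnt y0.
  have e3 : forall e, fR (pert (pert y vb e) vq e) = fR y + e * (GR vb y + GR vq y) + e ^+ 2 * (y vr + ((0 : R))).
    by move=> e; rewrite /fR /GR /pert /=; ring.
  have e4 : 0 <= ((0 : R)) by nnt y0.
  have e5 : forall e, fR (pert (pert y vb e) vr e) = fR y + e * (GR vb y + GR vr y) + e ^+ 2 * (y vq + ((0 : R))).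
    by move=> e; rewrite /fR /GR /pert /=; ring.
  have e6 : 0 <= ((0 : R)) by nnt y0.
  exact: (edge_zero (a := vb) (b := vq) (c := vr) 0 0 y0 y1 F0 mc isT isT Gz e1 e2 e3 e4 e5 e6).
have Z8 : y vq = 0 -> y vr = 0 /\ y vb = 0.
  have e1 : GR vq y = y vr * y vb + (y vt * y vp + y vu * y vp) by rewrite /GR /=; ring.
  have e2 : 0 <= (y vt * y vp + y vu * y vp) by nnt y0.
  have e3 : forall e, fR (pert (pert y vq e) vr e) = fR y + e * (GR vq y + GR vr y) + e ^+ 2 * (y vb + ((0 : R))).
    by move=> e; rewrite /fR /GR /pert /=; ring.
  have e4 : 0 <= ((0 : R)) by nnt y0.
  have e5 : forall e, fR (pert (pert y vq e) vb e) = fR y + e * (GR vq y + GR vb y) + e ^+ 2 * (y vr + ((0 : R))).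
    by move=> e; rewrite /fR /GR /pert /=; ring.
  have e6 : 0 <= ((0 : R)) by nnt y0.
  exact: (edge_zero (a := vq) (b := vr) (c := vb) 0 0 y0 y1 F0 mc isT isT Gz e1 e2 e3 e4 e5 e6).
have Z9 : y vr = 0 -> y vb = 0 /\ y vq = 0.
  have e1 : GR vr y = y vb * y vq + (y vt * y vs) by rewrite /GR /=; ring.
  have e2 : 0 <= (y vt * y vs) by nnt y0.
  have e3 : forall e, fR (pert (pert y vr e) vb e) = fR y + e * (GR vr y + GR vb y) + e ^+ 2 * (y vq + ((0 : R))).
    by move=> e; rewrite /fR /GR /pert /=; ring.
  have e4 : 0 <= ((0 : R)) by nnt y0.
  have e5 : forall e, fR (pert (pert y vr e) vq e) = fR y + e * (GR vr y + GR vq y) + e ^+ 2 * (y vb + ((0 : R))).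
    by move=> e; rewrite /fR /GR /pert /=; ring.
  have e6 : 0 <= ((0 : R)) by nnt y0.
  exact: (edge_zero (a := vr) (b := vb) (c := vq) 0 0 y0 y1 F0 mc isT isT Gz e1 e2 e3 e4 e5 e6).
have Z10 : y vb = 0 -> y vp = 0 /\ y vs = 0.
  have e1 : GR vb y = y vp * y vs + (y vq * y vr) by rewrite /GR /=; ring.
  have e2 : 0 <= (y vq * y vr) by nnt y0.
  have e3 : forall e, fR (pert (pert y vb e) vp e) = fR y + e * (GR vb y + GR vp y) + e ^+ 2 * (y vs + ((0 : R))).
    by move=> e; rewrite /fR /GR /pert /=; ring.
  have e4 : 0 <= ((0 : R)) by nnt y0.
  have e5 : forall e, fR (pert (pert y vb e) vs e) = fR y + e * (GR vb y + GR vs y) + e ^+ 2 * (y vp + ((0 : R))).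
    by move=> e; rewrite /fR /GR /pert /=; ring.
  have e6 : 0 <= ((0 : R)) by nnt y0.
  exact: (edge_zero (a := vb) (b := vp) (c := vs) 0 0 y0 y1 F0 mc isT isT Gz e1 e2 e3 e4 e5 e6).
have Z11 : y vp = 0 -> y vs = 0 /\ y vb = 0.
  have e1 : GR vp y = y vs * y vb + (y vt * y vq + y vu * y vq) by rewrite /GR /=; ring.
  have e2 : 0 <= (y vt * y vq + y vu * y vq) by nnt y0.
  have e3 : forall e, fR (pert (pert y vp e) vs e) = fR y + e * (GR vp y + GR vs y) + e ^+ 2 * (y vb + ((0 : R))).
    by move=> e; rewrite /fR /GR /pert /=; ring.
  have e4 : 0 <= ((0 : R)) by nnt y0.
  have e5 : forall e, fR (pert (pert y vp e) vb e) = fR y + e * (GR vp y + GR vb y) + e ^+ 2 * (y vs + ((0 : R))).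
    by move=> e; rewrite /fR /GR /pert /=; ring.
  have e6 : 0 <= ((0 : R)) by nnt y0.
  exact: (edge_zero (a := vp) (b := vs) (c := vb) 0 0 y0 y1 F0 mc isT isT Gz e1 e2 e3 e4 e5 e6).
have Z12 : y vs = 0 -> y vb = 0 /\ y vp = 0.
  have e1 : GR vs y = y vb * y vp + (y vt * y vr) by rewrite /GR /=; ring.
  have e2 : 0 <= (y vt * y vr) by nnt y0.
  have e3 : forall e, fR (pert (pert y vs e) vb e) = fR y + e * (GR vs y + GR vb y) + e ^+ 2 * (y vp + ((0 : R))).
    by move=> e; rewrite /fR /GR /pert /=; ring.
  have e4 : 0 <= ((0 : R)) by nnt y0.
  have e5 : forall e, fR (pert (pert y vs e) vp e) = fR y + e * (GR vs y + GR vp y) + e ^+ 2 * (y vb + ((0 : R))).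
    by move=> e; rewrite /fR /GR /pert /=; ring.
  have e6 : 0 <= ((0 : R)) by nnt y0.
  exact: (edge_zero (a := vs) (b := vb) (c := vp) 0 0 y0 y1 F0 mc isT isT Gz e1 e2 e3 e4 e5 e6).
have Z13 : y vu = 0 -> y vp = 0 /\ y vq = 0.
  have e1 : GR vu y = y vp * y vq + ((0 : R)) by rewrite /GR /=; ring.
  have e2 : 0 <= ((0 : R)) by nnt y0.
  have e3 : forall e, fR (pert (pert y vu e) vp e) = fR y + e * (GR vu y + GR vp y) + e ^+ 2 * (y vq + ((0 : R))).
    by move=> e; rewrite /fR /GR /pert /=; ring.
  have e4 : 0 <= ((0 : R)) by nnt y0.
  have e5 : forall e, fR (pert (pert y vu e) vq e) = fR y + e * (GR vu y + GR vq y) + e ^+ 2 * (y vp + ((0 : R))).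
    by move=> e; rewrite /fR /GR /pert /=; ring.
  have e6 : 0 <= ((0 : R)) by nnt y0.
  exact: (edge_zero (a := vu) (b := vp) (c := vq) 0 0 y0 y1 F0 mc isT isT Gz e1 e2 e3 e4 e5 e6).
have Z14 : y vp = 0 -> y vq = 0 /\ y vu = 0.
  have e1 : GR vp y = y vq * y vu + (y vt * y vq + y vb * y vs) by rewrite /GR /=; ring.
  have e2 : 0 <= (y vt * y vq + y vb * y vs) by nnt y0.
  have e3 : forall e, fR (pert (pert y vp e) vq e) = fR y + e * (GR vp y + GR vq y) + e ^+ 2 * (y vu + (y vt)).
    by move=> e; rewrite /fR /GR /pert /=; ring.
  have e4 : 0 <= (y vt) by nnt y0.
  have e5 : forall e, fR (pert (pert y vp e) vu e) = fR y + e * (GR vp y + GR vu y) + e ^+ 2 * (y vq + ((0 : R))).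
    by move=> e; rewrite /fR /GR /pert /=; ring.
  have e6 : 0 <= ((0 : R)) by nnt y0.
  exact: (edge_zero (a := vp) (b := vq) (c := vu) 0 0 y0 y1 F0 mc isT isT Gz e1 e2 e3 e4 e5 e6).
have Z15 : y vq = 0 -> y vu = 0 /\ y vp = 0.
  have e1 : GR vq y = y vu * y vp + (y vt * y vp + y vb * y vr) by rewrite /GR /=; ring.
  have e2 : 0 <= (y vt * y vp + y vb * y vr) by nnt y0.
  have e3 : forall e, fR (pert (pert y vq e) vu e) = fR y + e * (GR vq y + GR vu y) + e ^+ 2 * (y vp + ((0 : R))).
    by move=> e; rewrite /fR /GR /pert /=; ring.
  have e4 : 0 <= ((0 : R)) by nnt y0.
  have e5 : forall e, fR (pert (pert y vq e) vp e) = fR y + e * (GR vq y + GR vp y) + e ^+ 2 * (y vu + (y vt)).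
    by move=> e; rewrite /fR /GR /pert /=; ring.
  have e6 : 0 <= (y vt) by nnt y0.
  exact: (edge_zero (a := vq) (b := vu) (c := vp) 0 0 y0 y1 F0 mc isT isT Gz e1 e2 e3 e4 e5 e6).
have allz : forall i, y i = 0 -> False.
  apply: ord7P => h0.
  - have [h1b h1c] := Z1 h0.
    have [h2b h2c] := Z4 h0.
    have [h3b h3c] := Z11 h1b.
    have [h4b h4c] := Z14 h1b.
    by apply: (@allzero_contra _ 3 y isT y1); apply: ord7P.
  - have [h1b h1c] := Z7 h0.
    have [h2b h2c] := Z10 h0.
    have [h3b h3c] := Z3 h1b.
    have [h4b h4c] := Z15 h1b.
    by apply: (@allzero_contra _ 3 y isT y1); apply: ord7P.
  - have [h1b h1c] := Z2 h0.
    have [h2b h2c] := Z11 h0.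
    have [h3b h3c] := Z14 h0.
    have [h4b h4c] := Z8 h1b.
    by apply: (@allzero_contra _ 3 y isT y1); apply: ord7P.
  - have [h1b h1c] := Z3 h0.
    have [h2b h2c] := Z8 h0.
    have [h3b h3c] := Z15 h0.
    have [h4b h4c] := Z4 h1b.
    by apply: (@allzero_contra _ 3 y isT y1); apply: ord7P.
  - have [h1b h1c] := Z5 h0.
    have [h2b h2c] := Z9 h0.
    have [h3b h3c] := Z12 h1b.
    have [h4b h4c] := Z15 h2c.
    by apply: (@allzero_contra _ 3 y isT y1); apply: ord7P.
  - have [h1b h1c] := Z6 h0.
    have [h2b h2c] := Z12 h0.
    have [h3b h3c] := Z1 h1b.
    have [h4b h4c] := Z14 h2c.
    by apply: (@allzero_contra _ 3 y isT y1); apply: ord7P.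
  - have [h1b h1c] := Z13 h0.
    have [h2b h2c] := Z2 h1b.
    have [h3b h3c] := Z11 h1b.
    have [h4b h4c] := Z8 h1c.
    by apply: (@allzero_contra _ 3 y isT y1); apply: ord7P.
by move=> i; rewrite lt_def y0 andbT; apply/negP => /eqP /allz.
Qed.

Definition xR : 'I_7 -> R := fun i => nth 0 [:: (86 * 100 + 89); (86 * 100 + 23); ((1 * 100 + 0) * 100 + 0); ((1 * 100 + 0) * 100 + 0); (83 * 100 + 96); (83 * 100 + 96); (66 * 100 + 54)] i.

Lemma rankR (y : 'I_7 -> R) : is_hyper_pev 3 O_R y -> y vb < y vt.
Proof.
move=> [yp [y1 [rho [hs heq]]]].
have y0 : forall i, 0 <= y i by move=> i; exact: ltW.
have heig : forall i, rho * y i ^+ 2 = GR i y by move=> i; rewrite -gR -heq.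
have x0 : forall i, 0 < xR i by apply: ord7P; rewrite /xR /=; lra.
have hL := rho_lb hR fhR hs x0.
have Lr : (((1 * 100 + 12) * 100 + 91) / 5000 : R) <= rho.
  move: hL; rewrite sum7 /fR /xR /= => hL; lra.
clear hL.
have L0 : 0 <= (((1 * 100 + 12) * 100 + 91) / 5000 : R) by lra.
have [m hm] := argmax7 (fun i => y i / xR i).
have key : forall m M, 0 < M -> (forall j, y j <= M * xR j) -> y m = M * xR m ->
    y vb < y vt.
  apply: ord7P => M M0 yle ym.
  - have b0 : M * xR vt <= y vt by rewrite ym.
    have NB : M * xR vb < M * xR vt by rewrite ltr_pM2l // /xR /=; lra.
    exact: (le_lt_trans (yle vb) (lt_le_trans NB b0)).
  - have b0 : M * xR vb <= y vb by rewrite ym.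
    have b1 : M * ((99 * 100 + 98) : R) <= y vq.
      have OT : M ^+ 2 * (xR vq * xR vr) - y vq * y vr <= M ^+ 2 * GR vb xR - GR vb y.
        move: (pl (y0 vp) (yle vp) (y0 vs) (yle vs)); rewrite /GR /xR /= => *; lra.
      have NU : ((99 * 100 + 98) : R) * xR vr + GR vb xR - (((1 * 100 + 12) * 100 + 91) / 5000 : R) * xR vb ^+ 2 <= xR vq * xR vr.
        rewrite /GR /xR /=; lra.
      have BM : 0 <= xR vb by exact: ltW (x0 vb).
      exact: (hstep M0 (x0 vr) (y0 vq) (y0 vr) (yle vr) BM b0 Lr L0 (heig vb) OT NU).
    have b2 : M * ((86 * 100 + 79) : R) <= y vt.
      have OT : M ^+ 2 * (xR vt * xR vp) - y vt * y vp <= M ^+ 2 * GR vq xR - GR vq y.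
        move: (pl (y0 vb) (yle vb) (y0 vr) (yle vr)) (pl (y0 vu) (yle vu) (y0 vp) (yle vp)); rewrite /GR /xR /= => *; lra.
      have NU : ((86 * 100 + 79) : R) * xR vp + GR vq xR - (((1 * 100 + 12) * 100 + 91) / 5000 : R) * ((99 * 100 + 98) : R) ^+ 2 <= xR vt * xR vp.
        rewrite /GR /xR /=; lra.
      have BM : 0 <= ((99 * 100 + 98) : R) by lra.
      exact: (hstep M0 (x0 vp) (y0 vt) (y0 vp) (yle vp) BM b1 Lr L0 (heig vq) OT NU).
    have NB : M * xR vb < M * ((86 * 100 + 79) : R) by rewrite ltr_pM2l // /xR /=; lra.
    exact: (le_lt_trans (yle vb) (lt_le_trans NB b2)).
  - have b0 : M * xR vp <= y vp by rewrite ym.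
    have b1 : M * ((86 * 100 + 88) : R) <= y vt.
      have OT : M ^+ 2 * (xR vt * xR vq) - y vt * y vq <= M ^+ 2 * GR vp xR - GR vp y.
        move: (pl (y0 vb) (yle vb) (y0 vs) (yle vs)) (pl (y0 vu) (yle vu) (y0 vq) (yle vq)); rewrite /GR /xR /= => *; lra.
      have NU : ((86 * 100 + 88) : R) * xR vq + GR vp xR - (((1 * 100 + 12) * 100 + 91) / 5000 : R) * xR vp ^+ 2 <= xR vt * xR vq.
        rewrite /GR /xR /=; lra.
      have BM : 0 <= xR vp by exact: ltW (x0 vp).
      exact: (hstep M0 (x0 vq) (y0 vt) (y0 vq) (yle vq) BM b0 Lr L0 (heig vp) OT NU).
    have NB : M * xR vb < M * ((86 * 100 + 88) : R) by rewrite ltr_pM2l // /xR /=; lra.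
    exact: (le_lt_trans (yle vb) (lt_le_trans NB b1)).
  - have b0 : M * xR vq <= y vq by rewrite ym.
    have b1 : M * ((86 * 100 + 88) : R) <= y vt.
      have OT : M ^+ 2 * (xR vt * xR vp) - y vt * y vp <= M ^+ 2 * GR vq xR - GR vq y.
        move: (pl (y0 vb) (yle vb) (y0 vr) (yle vr)) (pl (y0 vu) (yle vu) (y0 vp) (yle vp)); rewrite /GR /xR /= => *; lra.
      have NU : ((86 * 100 + 88) : R) * xR vp + GR vq xR - (((1 * 100 + 12) * 100 + 91) / 5000 : R) * xR vq ^+ 2 <= xR vt * xR vp.
        rewrite /GR /xR /=; lra.
      have BM : 0 <= xR vq by exact: ltW (x0 vq).
      exact: (hstep M0 (x0 vp) (y0 vt) (y0 vp) (yle vp) BM b0 Lr L0 (heig vq) OT NU).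
    have NB : M * xR vb < M * ((86 * 100 + 88) : R) by rewrite ltr_pM2l // /xR /=; lra.
    exact: (le_lt_trans (yle vb) (lt_le_trans NB b1)).
  - have b0 : M * xR vr <= y vr by rewrite ym.
    have b1 : M * ((86 * 100 + 89) : R) <= y vt.
      have OT : M ^+ 2 * (xR vt * xR vs) - y vt * y vs <= M ^+ 2 * GR vr xR - GR vr y.
        move: (pl (y0 vb) (yle vb) (y0 vq) (yle vq)); rewrite /GR /xR /= => *; lra.
      have NU : ((86 * 100 + 89) : R) * xR vs + GR vr xR - (((1 * 100 + 12) * 100 + 91) / 5000 : R) * xR vr ^+ 2 <= xR vt * xR vs.
        rewrite /GR /xR /=; lra.
      have BM : 0 <= xR vr by exact: ltW (x0 vr).
      exact: (hstep M0 (x0 vs) (y0 vt) (y0 vs) (yle vs) BM b0 Lr L0 (heig vr) OT NU).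
    have NB : M * xR vb < M * ((86 * 100 + 89) : R) by rewrite ltr_pM2l // /xR /=; lra.
    exact: (le_lt_trans (yle vb) (lt_le_trans NB b1)).
  - have b0 : M * xR vs <= y vs by rewrite ym.
    have b1 : M * ((86 * 100 + 89) : R) <= y vt.
      have OT : M ^+ 2 * (xR vt * xR vr) - y vt * y vr <= M ^+ 2 * GR vs xR - GR vs y.
        move: (pl (y0 vb) (yle vb) (y0 vp) (yle vp)); rewrite /GR /xR /= => *; lra.
      have NU : ((86 * 100 + 89) : R) * xR vr + GR vs xR - (((1 * 100 + 12) * 100 + 91) / 5000 : R) * xR vs ^+ 2 <= xR vt * xR vr.
        rewrite /GR /xR /=; lra.
      have BM : 0 <= xR vs by exact: ltW (x0 vs).
      exact: (hstep M0 (x0 vr) (y0 vt) (y0 vr) (yle vr) BM b0 Lr L0 (heig vs) OT NU).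
    have NB : M * xR vb < M * ((86 * 100 + 89) : R) by rewrite ltr_pM2l // /xR /=; lra.
    exact: (le_lt_trans (yle vb) (lt_le_trans NB b1)).
  - have b0 : M * xR vu <= y vu by rewrite ym.
    have b1 : M * ((99 * 100 + 98) : R) <= y vp.
      have OT : M ^+ 2 * (xR vp * xR vq) - y vp * y vq <= M ^+ 2 * GR vu xR - GR vu y.
        rewrite /GR /xR /= ; lra.
      have NU : ((99 * 100 + 98) : R) * xR vq + GR vu xR - (((1 * 100 + 12) * 100 + 91) / 5000 : R) * xR vu ^+ 2 <= xR vp * xR vq.
        rewrite /GR /xR /=; lra.
      have BM : 0 <= xR vu by exact: ltW (x0 vu).
      exact: (hstep M0 (x0 vq) (y0 vp) (y0 vq) (yle vq) BM b0 Lr L0 (heig vu) OT NU).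
    have b2 : M * ((86 * 100 + 79) : R) <= y vt.
      have OT : M ^+ 2 * (xR vt * xR vq) - y vt * y vq <= M ^+ 2 * GR vp xR - GR vp y.
        move: (pl (y0 vb) (yle vb) (y0 vs) (yle vs)) (pl (y0 vu) (yle vu) (y0 vq) (yle vq)); rewrite /GR /xR /= => *; lra.
      have NU : ((86 * 100 + 79) : R) * xR vq + GR vp xR - (((1 * 100 + 12) * 100 + 91) / 5000 : R) * ((99 * 100 + 98) : R) ^+ 2 <= xR vt * xR vq.
        rewrite /GR /xR /=; lra.
      have BM : 0 <= ((99 * 100 + 98) : R) by lra.
      exact: (hstep M0 (x0 vq) (y0 vt) (y0 vq) (yle vq) BM b1 Lr L0 (heig vp) OT NU).
    have NB : M * xR vb < M * ((86 * 100 + 79) : R) by rewrite ltr_pM2l // /xR /=; lra.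
    exact: (le_lt_trans (yle vb) (lt_le_trans NB b2)).
have M0 : 0 < y m / xR m by rewrite divr_gt0.
apply: (key m (y m / xR m) M0).
  move=> j; rewrite -ler_pdivrMr //; exact: hm.
by rewrite divfK // gt_eqF.
Qed.

Lemma hexR : exists y : 'I_7 -> R, is_hyper_pev 3 O_R y.
Proof. exact: (hyper_exists hR (fun i y => @gR y i) cR (@fhR) (@fpR) (@fabsR) (@fnnR) (@posR)). Qed.

Definition fB (z : 'I_7 -> R) : R := z vt * z vp * z vr + z vt * z vp * z vs + z vb * z vp * z vq + z vb * z vr * z vs + z vu * z vp * z vq.
Definition GB (i : 'I_7) (z : 'I_7 -> R) : R := nth 0 [:: (z vp * z vr + z vp * z vs); (z vp * z vq + z vr * z vs); (z vt * z vr + z vt * z vs + z vb * z vq + z vu * z vq); (z vb * z vp + z vu * z vp); (z vt * z vp + z vb * z vs); (z vt * z vp + z vb * z vr); (z vp * z vq)] i.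

Lemma hB (z : 'I_7 -> R) : hform 3 O_B z = 3%:R * fB z.
Proof. rewrite /hform /O_B !big_cons big_nil !monomE !prod7 !inE /= /fB. ring. Qed.

Lemma gB (y : 'I_7 -> R) i : \sum_(e <- O_B | i \in e) monom y (e :\ i) = GB i y.
Proof. by move: i; apply: ord7P; rewrite /O_B !big_cons big_nil !inE /= !monomE !prod7 !inE /= /GB /=; ring. Qed.

Lemma cB : continuous (fun v : 'rV[R]_7 => fB (fun i => v ord0 i)).
Proof. rewrite /fB; contt. Qed.

Lemma fhB c z : fB (sc c z) = c ^+ 3 * fB z.
Proof. rewrite /fB /sc; ring. Qed.

Lemma fpB y i e : fB (pert y i e) = fB y + e * GB i y.
Proof. by move: i; apply: ord7P; rewrite /fB /GB /pert /=; ring. Qed.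

Lemma fabsB z : fB z <= fB (fun i => `|z i|).
Proof. rewrite /fB; repeat apply: lerD; apply: tri_abs. Qed.

Lemma fnnB z : (forall i, 0 <= z i) -> 0 <= fB z.
Proof. move=> z0; rewrite /fB; nnt z0. Qed.

Lemma GnnB y : (forall i, 0 <= y i) -> forall i, 0 <= GB i y.
Proof. move=> y0; apply: ord7P; rewrite /GB /=; nnt y0. Qed.

Lemma posB y : (forall i, 0 <= y i) -> \sum_i y i ^+ 3 = 1 -> maxcond 3 fB y -> forall i, 0 < y i.
Proof.
move=> y0 y1 mc.
have F0 := fnnB y0.
have Gz : forall i, y i = 0 -> GB i y = 0.
  move=> i yi; have [h _] := foc3 i (@fpB) y0 y1 F0 mc.
  apply/eqP; rewrite eq_le GnnB // andbT; by rewrite yi expr0n mulr0 in h.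
have Z1 : y vt = 0 -> y vp = 0 /\ y vr = 0.
  have e1 : GB vt y = y vp * y vr + (y vp * y vs) by rewrite /GB /=; ring.
  have e2 : 0 <= (y vp * y vs) by nnt y0.
  have e3 : forall e, fB (pert (pert y vt e) vp e) = fB y + e * (GB vt y + GB vp y) + e ^+ 2 * (y vr + (y vs)).
    by move=> e; rewrite /fB /GB /pert /=; ring.
  have e4 : 0 <= (y vs) by nnt y0.
  have e5 : forall e, fB (pert (pert y vt e) vr e) = fB y + e * (GB vt y + GB vr y) + e ^+ 2 * (y vp + ((0 : R))).
    by move=> e; rewrite /fB /GB /pert /=; ring.
  have e6 : 0 <= ((0 : R)) by nnt y0.
  exact: (edge_zero (a := vt) (b := vp) (c := vr) 0 0 y0 y1 F0 mc isT isT Gz e1 e2 e3 e4 e5 e6).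
have Z2 : y vp = 0 -> y vr = 0 /\ y vt = 0.
  have e1 : GB vp y = y vr * y vt + (y vt * y vs + y vb * y vq + y vu * y vq) by rewrite /GB /=; ring.
  have e2 : 0 <= (y vt * y vs + y vb * y vq + y vu * y vq) by nnt y0.
  have e3 : forall e, fB (pert (pert y vp e) vr e) = fB y + e * (GB vp y + GB vr y) + e ^+ 2 * (y vt + ((0 : R))).
    by move=> e; rewrite /fB /GB /pert /=; ring.
  have e4 : 0 <= ((0 : R)) by nnt y0.
  have e5 : forall e, fB (pert (pert y vp e) vt e) = fB y + e * (GB vp y + GB vt y) + e ^+ 2 * (y vr + (y vs)).
    by move=> e; rewrite /fB /GB /pert /=; ring.
  have e6 : 0 <= (y vs) by nnt y0.
  exact: (edge_zero (a := vp) (b := vr) (c := vt) 0 0 y0 y1 F0 mc isT isT Gz e1 e2 e3 e4 e5 e6).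
have Z3 : y vr = 0 -> y vt = 0 /\ y vp = 0.
  have e1 : GB vr y = y vt * y vp + (y vb * y vs) by rewrite /GB /=; ring.
  have e2 : 0 <= (y vb * y vs) by nnt y0.
  have e3 : forall e, fB (pert (pert y vr e) vt e) = fB y + e * (GB vr y + GB vt y) + e ^+ 2 * (y vp + ((0 : R))).
    by move=> e; rewrite /fB /GB /pert /=; ring.
  have e4 : 0 <= ((0 : R)) by nnt y0.
  have e5 : forall e, fB (pert (pert y vr e) vp e) = fB y + e * (GB vr y + GB vp y) + e ^+ 2 * (y vt + ((0 : R))).
    by move=> e; rewrite /fB /GB /pert /=; ring.
  have e6 : 0 <= ((0 : R)) by nnt y0.
  exact: (edge_zero (a := vr) (b := vt) (c := vp) 0 0 y0 y1 F0 mc isT isT Gz e1 e2 e3 e4 e5 e6).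
have Z4 : y vt = 0 -> y vp = 0 /\ y vs = 0.
  have e1 : GB vt y = y vp * y vs + (y vp * y vr) by rewrite /GB /=; ring.
  have e2 : 0 <= (y vp * y vr) by nnt y0.
  have e3 : forall e, fB (pert (pert y vt e) vp e) = fB y + e * (GB vt y + GB vp y) + e ^+ 2 * (y vs + (y vr)).
    by move=> e; rewrite /fB /GB /pert /=; ring.
  have e4 : 0 <= (y vr) by nnt y0.
  have e5 : forall e, fB (pert (pert y vt e) vs e) = fB y + e * (GB vt y + GB vs y) + e ^+ 2 * (y vp + ((0 : R))).
    by move=> e; rewrite /fB /GB /pert /=; ring.
  have e6 : 0 <= ((0 : R)) by nnt y0.
  exact: (edge_zero (a := vt) (b := vp) (c := vs) 0 0 y0 y1 F0 mc isT isT Gz e1 e2 e3 e4 e5 e6).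
have Z5 : y vp = 0 -> y vs = 0 /\ y vt = 0.
  have e1 : GB vp y = y vs * y vt + (y vt * y vr + y vb * y vq + y vu * y vq) by rewrite /GB /=; ring.
  have e2 : 0 <= (y vt * y vr + y vb * y vq + y vu * y vq) by nnt y0.
  have e3 : forall e, fB (pert (pert y vp e) vs e) = fB y + e * (GB vp y + GB vs y) + e ^+ 2 * (y vt + ((0 : R))).
    by move=> e; rewrite /fB /GB /pert /=; ring.
  have e4 : 0 <= ((0 : R)) by nnt y0.
  have e5 : forall e, fB (pert (pert y vp e) vt e) = fB y + e * (GB vp y + GB vt y) + e ^+ 2 * (y vs + (y vr)).
    by move=> e; rewrite /fB /GB /pert /=; ring.
  have e6 : 0 <= (y vr) by nnt y0.
  exact: (edge_zero (a := vp) (b := vs) (c := vt) 0 0 y0 y1 F0 mc isT isT Gz e1 e2 e3 e4 e5 e6).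
have Z6 : y vs = 0 -> y vt = 0 /\ y vp = 0.
  have e1 : GB vs y = y vt * y vp + (y vb * y vr) by rewrite /GB /=; ring.
  have e2 : 0 <= (y vb * y vr) by nnt y0.
  have e3 : forall e, fB (pert (pert y vs e) vt e) = fB y + e * (GB vs y + GB vt y) + e ^+ 2 * (y vp + ((0 : R))).
    by move=> e; rewrite /fB /GB /pert /=; ring.
  have e4 : 0 <= ((0 : R)) by nnt y0.
  have e5 : forall e, fB (pert (pert y vs e) vp e) = fB y + e * (GB vs y + GB vp y) + e ^+ 2 * (y vt + ((0 : R))).
    by move=> e; rewrite /fB /GB /pert /=; ring.
  have e6 : 0 <= ((0 : R)) by nnt y0.
  exact: (edge_zero (a := vs) (b := vt) (c := vp) 0 0 y0 y1 F0 mc isT isT Gz e1 e2 e3 e4 e5 e6).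
have Z7 : y vb = 0 -> y vp = 0 /\ y vq = 0.
  have e1 : GB vb y = y vp * y vq + (y vr * y vs) by rewrite /GB /=; ring.
  have e2 : 0 <= (y vr * y vs) by nnt y0.
  have e3 : forall e, fB (pert (pert y vb e) vp e) = fB y + e * (GB vb y + GB vp y) + e ^+ 2 * (y vq + ((0 : R))).
    by move=> e; rewrite /fB /GB /pert /=; ring.
  have e4 : 0 <= ((0 : R)) by nnt y0.
  have e5 : forall e, fB (pert (pert y vb e) vq e) = fB y + e * (GB vb y + GB vq y) + e ^+ 2 * (y vp + ((0 : R))).
    by move=> e; rewrite /fB /GB /pert /=; ring.
  have e6 : 0 <= ((0 : R)) by nnt y0.
  exact: (edge_zero (a := vb) (b := vp) (c := vq) 0 0 y0 y1 F0 mc isT isT Gz e1 e2 e3 e4 e5 e6).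
have Z8 : y vp = 0 -> y vq = 0 /\ y vb = 0.
  have e1 : GB vp y = y vq * y vb + (y vt * y vr + y vt * y vs + y vu * y vq) by rewrite /GB /=; ring.
  have e2 : 0 <= (y vt * y vr + y vt * y vs + y vu * y vq) by nnt y0.
  have e3 : forall e, fB (pert (pert y vp e) vq e) = fB y + e * (GB vp y + GB vq y) + e ^+ 2 * (y vb + (y vu)).
    by move=> e; rewrite /fB /GB /pert /=; ring.
  have e4 : 0 <= (y vu) by nnt y0.
  have e5 : forall e, fB (pert (pert y vp e) vb e) = fB y + e * (GB vp y + GB vb y) + e ^+ 2 * (y vq + ((0 : R))).
    by move=> e; rewrite /fB /GB /pert /=; ring.
  have e6 : 0 <= ((0 : R)) by nnt y0.
  exact: (edge_zero (a := vp) (b := vq) (c := vb) 0 0 y0 y1 F0 mc isT isT Gz e1 e2 e3 e4 e5 e6).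
have Z9 : y vq = 0 -> y vb = 0 /\ y vp = 0.
  have e1 : GB vq y = y vb * y vp + (y vu * y vp) by rewrite /GB /=; ring.
  have e2 : 0 <= (y vu * y vp) by nnt y0.
  have e3 : forall e, fB (pert (pert y vq e) vb e) = fB y + e * (GB vq y + GB vb y) + e ^+ 2 * (y vp + ((0 : R))).
    by move=> e; rewrite /fB /GB /pert /=; ring.
  have e4 : 0 <= ((0 : R)) by nnt y0.
  have e5 : forall e, fB (pert (pert y vq e) vp e) = fB y + e * (GB vq y + GB vp y) + e ^+ 2 * (y vb + (y vu)).
    by move=> e; rewrite /fB /GB /pert /=; ring.
  have e6 : 0 <= (y vu) by nnt y0.
  exact: (edge_zero (a := vq) (b := vb) (c := vp) 0 0 y0 y1 F0 mc isT isT Gz e1 e2 e3 e4 e5 e6).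
have Z10 : y vb = 0 -> y vr = 0 /\ y vs = 0.
  have e1 : GB vb y = y vr * y vs + (y vp * y vq) by rewrite /GB /=; ring.
  have e2 : 0 <= (y vp * y vq) by nnt y0.
  have e3 : forall e, fB (pert (pert y vb e) vr e) = fB y + e * (GB vb y + GB vr y) + e ^+ 2 * (y vs + ((0 : R))).
    by move=> e; rewrite /fB /GB /pert /=; ring.
  have e4 : 0 <= ((0 : R)) by nnt y0.
  have e5 : forall e, fB (pert (pert y vb e) vs e) = fB y + e * (GB vb y + GB vs y) + e ^+ 2 * (y vr + ((0 : R))).
    by move=> e; rewrite /fB /GB /pert /=; ring.
  have e6 : 0 <= ((0 : R)) by nnt y0.
  exact: (edge_zero (a := vb) (b := vr) (c := vs) 0 0 y0 y1 F0 mc isT isT Gz e1 e2 e3 e4 e5 e6).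
have Z11 : y vr = 0 -> y vs = 0 /\ y vb = 0.
  have e1 : GB vr y = y vs * y vb + (y vt * y vp) by rewrite /GB /=; ring.
  have e2 : 0 <= (y vt * y vp) by nnt y0.
  have e3 : forall e, fB (pert (pert y vr e) vs e) = fB y + e * (GB vr y + GB vs y) + e ^+ 2 * (y vb + ((0 : R))).
    by move=> e; rewrite /fB /GB /pert /=; ring.
  have e4 : 0 <= ((0 : R)) by nnt y0.
  have e5 : forall e, fB (pert (pert y vr e) vb e) = fB y + e * (GB vr y + GB vb y) + e ^+ 2 * (y vs + ((0 : R))).
    by move=> e; rewrite /fB /GB /pert /=; ring.
  have e6 : 0 <= ((0 : R)) by nnt y0.
  exact: (edge_zero (a := vr) (b := vs) (c := vb) 0 0 y0 y1 F0 mc isT isT Gz e1 e2 e3 e4 e5 e6).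
have Z12 : y vs = 0 -> y vb = 0 /\ y vr = 0.
  have e1 : GB vs y = y vb * y vr + (y vt * y vp) by rewrite /GB /=; ring.
  have e2 : 0 <= (y vt * y vp) by nnt y0.
  have e3 : forall e, fB (pert (pert y vs e) vb e) = fB y + e * (GB vs y + GB vb y) + e ^+ 2 * (y vr + ((0 : R))).
    by move=> e; rewrite /fB /GB /pert /=; ring.
  have e4 : 0 <= ((0 : R)) by nnt y0.
  have e5 : forall e, fB (pert (pert y vs e) vr e) = fB y + e * (GB vs y + GB vr y) + e ^+ 2 * (y vb + ((0 : R))).
    by move=> e; rewrite /fB /GB /pert /=; ring.
  have e6 : 0 <= ((0 : R)) by nnt y0.
  exact: (edge_zero (a := vs) (b := vb) (c := vr) 0 0 y0 y1 F0 mc isT isT Gz e1 e2 e3 e4 e5 e6).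
have Z13 : y vu = 0 -> y vp = 0 /\ y vq = 0.
  have e1 : GB vu y = y vp * y vq + ((0 : R)) by rewrite /GB /=; ring.
  have e2 : 0 <= ((0 : R)) by nnt y0.
  have e3 : forall e, fB (pert (pert y vu e) vp e) = fB y + e * (GB vu y + GB vp y) + e ^+ 2 * (y vq + ((0 : R))).
    by move=> e; rewrite /fB /GB /pert /=; ring.
  have e4 : 0 <= ((0 : R)) by nnt y0.
  have e5 : forall e, fB (pert (pert y vu e) vq e) = fB y + e * (GB vu y + GB vq y) + e ^+ 2 * (y vp + ((0 : R))).
    by move=> e; rewrite /fB /GB /pert /=; ring.
  have e6 : 0 <= ((0 : R)) by nnt y0.
  exact: (edge_zero (a := vu) (b := vp) (c := vq) 0 0 y0 y1 F0 mc isT isT Gz e1 e2 e3 e4 e5 e6).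
have Z14 : y vp = 0 -> y vq = 0 /\ y vu = 0.
  have e1 : GB vp y = y vq * y vu + (y vt * y vr + y vt * y vs + y vb * y vq) by rewrite /GB /=; ring.
  have e2 : 0 <= (y vt * y vr + y vt * y vs + y vb * y vq) by nnt y0.
  have e3 : forall e, fB (pert (pert y vp e) vq e) = fB y + e * (GB vp y + GB vq y) + e ^+ 2 * (y vu + (y vb)).
    by move=> e; rewrite /fB /GB /pert /=; ring.
  have e4 : 0 <= (y vb) by nnt y0.
  have e5 : forall e, fB (pert (pert y vp e) vu e) = fB y + e * (GB vp y + GB vu y) + e ^+ 2 * (y vq + ((0 : R))).
    by move=> e; rewrite /fB /GB /pert /=; ring.
  have e6 : 0 <= ((0 : R)) by nnt y0.
  exact: (edge_zero (a := vp) (b := vq) (c := vu) 0 0 y0 y1 F0 mc isT isT Gz e1 e2 e3 e4 e5 e6).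
have Z15 : y vq = 0 -> y vu = 0 /\ y vp = 0.
  have e1 : GB vq y = y vu * y vp + (y vb * y vp) by rewrite /GB /=; ring.
  have e2 : 0 <= (y vb * y vp) by nnt y0.
  have e3 : forall e, fB (pert (pert y vq e) vu e) = fB y + e * (GB vq y + GB vu y) + e ^+ 2 * (y vp + ((0 : R))).
    by move=> e; rewrite /fB /GB /pert /=; ring.
  have e4 : 0 <= ((0 : R)) by nnt y0.
  have e5 : forall e, fB (pert (pert y vq e) vp e) = fB y + e * (GB vq y + GB vp y) + e ^+ 2 * (y vu + (y vb)).
    by move=> e; rewrite /fB /GB /pert /=; ring.
  have e6 : 0 <= (y vb) by nnt y0.
  exact: (edge_zero (a := vq) (b := vu) (c := vp) 0 0 y0 y1 F0 mc isT isT Gz e1 e2 e3 e4 e5 e6).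
have allz : forall i, y i = 0 -> False.
  apply: ord7P => h0.
  - have [h1b h1c] := Z1 h0.
    have [h2b h2c] := Z4 h0.
    have [h3b h3c] := Z8 h1b.
    have [h4b h4c] := Z14 h1b.
    by apply: (@allzero_contra _ 3 y isT y1); apply: ord7P.
  - have [h1b h1c] := Z7 h0.
    have [h2b h2c] := Z10 h0.
    have [h3b h3c] := Z2 h1b.
    have [h4b h4c] := Z14 h1b.
    by apply: (@allzero_contra _ 3 y isT y1); apply: ord7P.
  - have [h1b h1c] := Z2 h0.
    have [h2b h2c] := Z5 h0.
    have [h3b h3c] := Z8 h0.
    have [h4b h4c] := Z14 h0.
    by apply: (@allzero_contra _ 3 y isT y1); apply: ord7P.
  - have [h1b h1c] := Z9 h0.
    have [h2b h2c] := Z15 h0.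
    have [h3b h3c] := Z10 h1b.
    have [h4b h4c] := Z2 h1c.
    by apply: (@allzero_contra _ 3 y isT y1); apply: ord7P.
  - have [h1b h1c] := Z3 h0.
    have [h2b h2c] := Z11 h0.
    have [h3b h3c] := Z8 h1c.
    have [h4b h4c] := Z14 h1c.
    by apply: (@allzero_contra _ 3 y isT y1); apply: ord7P.
  - have [h1b h1c] := Z6 h0.
    have [h2b h2c] := Z12 h0.
    have [h3b h3c] := Z8 h1c.
    have [h4b h4c] := Z14 h1c.
    by apply: (@allzero_contra _ 3 y isT y1); apply: ord7P.
  - have [h1b h1c] := Z13 h0.
    have [h2b h2c] := Z2 h1b.
    have [h3b h3c] := Z5 h1b.
    have [h4b h4c] := Z8 h1b.
    by apply: (@allzero_contra _ 3 y isT y1); apply: ord7P.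
by move=> i; rewrite lt_def y0 andbT; apply/negP => /eqP /allz.
Qed.

Definition xB : 'I_7 -> R := fun i => nth 0 [:: (82 * 100 + 33); (77 * 100 + 13); ((1 * 100 + 0) * 100 + 0); (76 * 100 + 18); (78 * 100 + 53); (78 * 100 + 53); (57 * 100 + 34)] i.

Lemma rankB (y : 'I_7 -> R) : is_hyper_pev 3 O_B y -> y vq < y vr.
Proof.
move=> [yp [y1 [rho [hs heq]]]].
have y0 : forall i, 0 <= y i by move=> i; exact: ltW.
have heig : forall i, rho * y i ^+ 2 = GB i y by move=> i; rewrite -gB -heq.
have x0 : forall i, 0 < xB i by apply: ord7P; rewrite /xB /=; lra.
have hL := rho_lb hB fhB hs x0.
have Lr : ((57 * 100 + 93) / 2500 : R) <= rho.
  move: hL; rewrite sum7 /fB /xB /= => hL; lra.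
clear hL.
have L0 : 0 <= ((57 * 100 + 93) / 2500 : R) by lra.
have [m hm] := argmax7 (fun i => y i / xB i).
have key : forall m M, 0 < M -> (forall j, y j <= M * xB j) -> y m = M * xB m ->
    y vq < y vr.
  apply: ord7P => M M0 yle ym.
  - have b0 : M * xB vt <= y vt by rewrite ym.
    have b1 : M * ((78 * 100 + 53) : R) <= y vr.
      have OT : M ^+ 2 * (xB vr * xB vp) - y vr * y vp <= M ^+ 2 * GB vt xB - GB vt y.
        move: (pl (y0 vp) (yle vp) (y0 vs) (yle vs)); rewrite /GB /xB /= => *; lra.
      have NU : ((78 * 100 + 53) : R) * xB vp + GB vt xB - ((57 * 100 + 93) / 2500 : R) * xB vt ^+ 2 <= xB vr * xB vp.
        rewrite /GB /xB /=; lra.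
      have BM : 0 <= xB vt by exact: ltW (x0 vt).
      exact: (hstep M0 (x0 vp) (y0 vr) (y0 vp) (yle vp) BM b0 Lr L0 (heig vt) OT NU).
    have NB : M * xB vq < M * ((78 * 100 + 53) : R) by rewrite ltr_pM2l // /xB /=; lra.
    exact: (le_lt_trans (yle vq) (lt_le_trans NB b1)).
  - have b0 : M * xB vb <= y vb by rewrite ym.
    have b1 : M * ((78 * 100 + 53) : R) <= y vr.
      have OT : M ^+ 2 * (xB vr * xB vs) - y vr * y vs <= M ^+ 2 * GB vb xB - GB vb y.
        move: (pl (y0 vp) (yle vp) (y0 vq) (yle vq)); rewrite /GB /xB /= => *; lra.
      have NU : ((78 * 100 + 53) : R) * xB vs + GB vb xB - ((57 * 100 + 93) / 2500 : R) * xB vb ^+ 2 <= xB vr * xB vs.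
        rewrite /GB /xB /=; lra.
      have BM : 0 <= xB vb by exact: ltW (x0 vb).
      exact: (hstep M0 (x0 vs) (y0 vr) (y0 vs) (yle vs) BM b0 Lr L0 (heig vb) OT NU).
    have NB : M * xB vq < M * ((78 * 100 + 53) : R) by rewrite ltr_pM2l // /xB /=; lra.
    exact: (le_lt_trans (yle vq) (lt_le_trans NB b1)).
  - have b0 : M * xB vp <= y vp by rewrite ym.
    have b1 : M * ((78 * 100 + 49) : R) <= y vr.
      have OT : M ^+ 2 * (xB vr * xB vt) - y vr * y vt <= M ^+ 2 * GB vp xB - GB vp y.
        move: (pl (y0 vt) (yle vt) (y0 vs) (yle vs)) (pl (y0 vb) (yle vb) (y0 vq) (yle vq)) (pl (y0 vu) (yle vu) (y0 vq) (yle vq)); rewrite /GB /xB /= => *; lra.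
      have NU : ((78 * 100 + 49) : R) * xB vt + GB vp xB - ((57 * 100 + 93) / 2500 : R) * xB vp ^+ 2 <= xB vr * xB vt.
        rewrite /GB /xB /=; lra.
      have BM : 0 <= xB vp by exact: ltW (x0 vp).
      exact: (hstep M0 (x0 vt) (y0 vr) (y0 vt) (yle vt) BM b0 Lr L0 (heig vp) OT NU).
    have NB : M * xB vq < M * ((78 * 100 + 49) : R) by rewrite ltr_pM2l // /xB /=; lra.
    exact: (le_lt_trans (yle vq) (lt_le_trans NB b1)).
  - have b0 : M * xB vq <= y vq by rewrite ym.
    have b1 : M * (((1 * 100 + 0) * 100 + 0) : R) <= y vp.
      have OT : M ^+ 2 * (xB vp * xB vb) - y vp * y vb <= M ^+ 2 * GB vq xB - GB vq y.
        move: (pl (y0 vu) (yle vu) (y0 vp) (yle vp)); rewrite /GB /xB /= => *; lra.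
      have NU : (((1 * 100 + 0) * 100 + 0) : R) * xB vb + GB vq xB - ((57 * 100 + 93) / 2500 : R) * xB vq ^+ 2 <= xB vp * xB vb.
        rewrite /GB /xB /=; lra.
      have BM : 0 <= xB vq by exact: ltW (x0 vq).
      exact: (hstep M0 (x0 vb) (y0 vp) (y0 vb) (yle vb) BM b0 Lr L0 (heig vq) OT NU).
    have b2 : M * ((78 * 100 + 49) : R) <= y vr.
      have OT : M ^+ 2 * (xB vr * xB vt) - y vr * y vt <= M ^+ 2 * GB vp xB - GB vp y.
        move: (pl (y0 vt) (yle vt) (y0 vs) (yle vs)) (pl (y0 vb) (yle vb) (y0 vq) (yle vq)) (pl (y0 vu) (yle vu) (y0 vq) (yle vq)); rewrite /GB /xB /= => *; lra.
      have NU : ((78 * 100 + 49) : R) * xB vt + GB vp xB - ((57 * 100 + 93) / 2500 : R) * (((1 * 100 + 0) * 100 + 0) : R) ^+ 2 <= xB vr * xB vt.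
        rewrite /GB /xB /=; lra.
      have BM : 0 <= (((1 * 100 + 0) * 100 + 0) : R) by lra.
      exact: (hstep M0 (x0 vt) (y0 vr) (y0 vt) (yle vt) BM b1 Lr L0 (heig vp) OT NU).
    have NB : M * xB vq < M * ((78 * 100 + 49) : R) by rewrite ltr_pM2l // /xB /=; lra.
    exact: (le_lt_trans (yle vq) (lt_le_trans NB b2)).
  - have b0 : M * xB vr <= y vr by rewrite ym.
    have NB : M * xB vq < M * xB vr by rewrite ltr_pM2l // /xB /=; lra.
    exact: (le_lt_trans (yle vq) (lt_le_trans NB b0)).
  - have b0 : M * xB vs <= y vs by rewrite ym.
    have b1 : M * ((78 * 100 + 53) : R) <= y vr.
      have OT : M ^+ 2 * (xB vr * xB vb) - y vr * y vb <= M ^+ 2 * GB vs xB - GB vs y.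
        move: (pl (y0 vt) (yle vt) (y0 vp) (yle vp)); rewrite /GB /xB /= => *; lra.
      have NU : ((78 * 100 + 53) : R) * xB vb + GB vs xB - ((57 * 100 + 93) / 2500 : R) * xB vs ^+ 2 <= xB vr * xB vb.
        rewrite /GB /xB /=; lra.
      have BM : 0 <= xB vs by exact: ltW (x0 vs).
      exact: (hstep M0 (x0 vb) (y0 vr) (y0 vb) (yle vb) BM b0 Lr L0 (heig vs) OT NU).
    have NB : M * xB vq < M * ((78 * 100 + 53) : R) by rewrite ltr_pM2l // /xB /=; lra.
    exact: (le_lt_trans (yle vq) (lt_le_trans NB b1)).
  - have b0 : M * xB vu <= y vu by rewrite ym.
    have b1 : M * (((1 * 100 + 0) * 100 + 0) : R) <= y vp.
      have OT : M ^+ 2 * (xB vp * xB vq) - y vp * y vq <= M ^+ 2 * GB vu xB - GB vu y.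
        rewrite /GB /xB /= ; lra.
      have NU : (((1 * 100 + 0) * 100 + 0) : R) * xB vq + GB vu xB - ((57 * 100 + 93) / 2500 : R) * xB vu ^+ 2 <= xB vp * xB vq.
        rewrite /GB /xB /=; lra.
      have BM : 0 <= xB vu by exact: ltW (x0 vu).
      exact: (hstep M0 (x0 vq) (y0 vp) (y0 vq) (yle vq) BM b0 Lr L0 (heig vu) OT NU).
    have b2 : M * ((78 * 100 + 49) : R) <= y vr.
      have OT : M ^+ 2 * (xB vr * xB vt) - y vr * y vt <= M ^+ 2 * GB vp xB - GB vp y.
        move: (pl (y0 vt) (yle vt) (y0 vs) (yle vs)) (pl (y0 vb) (yle vb) (y0 vq) (yle vq)) (pl (y0 vu) (yle vu) (y0 vq) (yle vq)); rewrite /GB /xB /= => *; lra.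
      have NU : ((78 * 100 + 49) : R) * xB vt + GB vp xB - ((57 * 100 + 93) / 2500 : R) * (((1 * 100 + 0) * 100 + 0) : R) ^+ 2 <= xB vr * xB vt.
        rewrite /GB /xB /=; lra.
      have BM : 0 <= (((1 * 100 + 0) * 100 + 0) : R) by lra.
      exact: (hstep M0 (x0 vt) (y0 vr) (y0 vt) (yle vt) BM b1 Lr L0 (heig vp) OT NU).
    have NB : M * xB vq < M * ((78 * 100 + 49) : R) by rewrite ltr_pM2l // /xB /=; lra.
    exact: (le_lt_trans (yle vq) (lt_le_trans NB b2)).
have M0 : 0 < y m / xB m by rewrite divr_gt0.
apply: (key m (y m / xB m) M0).
  move=> j; rewrite -ler_pdivrMr //; exact: hm.
by rewrite divfK // gt_eqF.
Qed.

Lemma hexB : exists y : 'I_7 -> R, is_hyper_pev 3 O_B y.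
Proof. exact: (hyper_exists hB (fun i y => @gB y i) cB (@fhB) (@fpB) (@fabsB) (@fnnB) (@posB)). Qed.

Definition qR (z : 'I_7 -> R) : R := z vt * z vp + z vt * z vq + z vp * z vq + z vt * z vr + z vt * z vs + z vr * z vs + z vb * z vq + z vb * z vr + z vq * z vr + z vb * z vp + z vb * z vs + z vp * z vs + z vu * z vp + z vu * z vq + z vp * z vq.
Definition GsR (i : 'I_7) (z : 'I_7 -> R) : R := nth 0 [:: (z vp + z vq + z vr + z vs); (z vq + z vr + z vp + z vs); (z vt + z vq + z vb + z vs + z vu + z vq); (z vt + z vp + z vb + z vr + z vu + z vp); (z vt + z vs + z vb + z vq); (z vt + z vr + z vb + z vp); (z vp + z vq)] i.

Lemma sgR i (z : 'I_7 -> R) : \sum_j shadow_mult R O_R i j * z j = GsR i z.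
Proof. by move: i; apply: ord7P; rewrite sum7 /shadow_mult /O_R /= !inE /= /GsR /=; ring. Qed.

Lemma cqR : continuous (fun v : 'rV[R]_7 => qR (fun i => v ord0 i)).
Proof. rewrite /qR; contt. Qed.

Lemma qhR c z : qR (sc c z) = c ^+ 2 * qR z.
Proof. rewrite /qR /sc; ring. Qed.

Lemma qpR y i e : qR (pert y i e) = qR y + e * GsR i y.
Proof. by move: i; apply: ord7P; rewrite /qR /GsR /pert /=; ring. Qed.

Lemma qnnR z : (forall i, 0 <= z i) -> 0 <= qR z.
Proof. move=> z0; rewrite /qR; nnt z0. Qed.

Lemma posSR y : (forall i, 0 <= y i) -> \sum_i y i ^+ 2 = 1 ->
  (forall i, GsR i y <= 2%:R * qR y * y i) -> forall i, 0 < y i.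
Proof.
move=> y0 y1 hG.
have Gz : forall i, y i = 0 -> GsR i y <= 0.
  by move=> i yi; have := hG i; rewrite yi mulr0.
have N1 : y vt = 0 -> y vp = 0 /\ y vp = 0.
  move=> h; have e1 : GsR vt y = 1%:R * y vp + (y vq + y vr + y vs) by rewrite /GsR /=; ring.
  have e2 : 0 <= (y vq + y vr + y vs) by nnt y0.
  have := nb_zero (Gz _ h) e1 (ltr0n _ _) (y0 _) e2; by [].
have N2 : y vt = 0 -> y vq = 0 /\ y vq = 0.
  move=> h; have e1 : GsR vt y = 1%:R * y vq + (y vp + y vr + y vs) by rewrite /GsR /=; ring.
  have e2 : 0 <= (y vp + y vr + y vs) by nnt y0.
  have := nb_zero (Gz _ h) e1 (ltr0n _ _) (y0 _) e2; by [].
have N3 : y vt = 0 -> y vr = 0 /\ y vr = 0.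
  move=> h; have e1 : GsR vt y = 1%:R * y vr + (y vp + y vq + y vs) by rewrite /GsR /=; ring.
  have e2 : 0 <= (y vp + y vq + y vs) by nnt y0.
  have := nb_zero (Gz _ h) e1 (ltr0n _ _) (y0 _) e2; by [].
have N4 : y vt = 0 -> y vs = 0 /\ y vs = 0.
  move=> h; have e1 : GsR vt y = 1%:R * y vs + (y vp + y vq + y vr) by rewrite /GsR /=; ring.
  have e2 : 0 <= (y vp + y vq + y vr) by nnt y0.
  have := nb_zero (Gz _ h) e1 (ltr0n _ _) (y0 _) e2; by [].
have N5 : y vb = 0 -> y vq = 0 /\ y vq = 0.
  move=> h; have e1 : GsR vb y = 1%:R * y vq + (y vr + y vp + y vs) by rewrite /GsR /=; ring.
  have e2 : 0 <= (y vr + y vp + y vs) by nnt y0.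
  have := nb_zero (Gz _ h) e1 (ltr0n _ _) (y0 _) e2; by [].
have N6 : y vb = 0 -> y vr = 0 /\ y vr = 0.
  move=> h; have e1 : GsR vb y = 1%:R * y vr + (y vq + y vp + y vs) by rewrite /GsR /=; ring.
  have e2 : 0 <= (y vq + y vp + y vs) by nnt y0.
  have := nb_zero (Gz _ h) e1 (ltr0n _ _) (y0 _) e2; by [].
have N7 : y vb = 0 -> y vp = 0 /\ y vp = 0.
  move=> h; have e1 : GsR vb y = 1%:R * y vp + (y vq + y vr + y vs) by rewrite /GsR /=; ring.
  have e2 : 0 <= (y vq + y vr + y vs) by nnt y0.
  have := nb_zero (Gz _ h) e1 (ltr0n _ _) (y0 _) e2; by [].
have N8 : y vb = 0 -> y vs = 0 /\ y vs = 0.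
  move=> h; have e1 : GsR vb y = 1%:R * y vs + (y vq + y vr + y vp) by rewrite /GsR /=; ring.
  have e2 : 0 <= (y vq + y vr + y vp) by nnt y0.
  have := nb_zero (Gz _ h) e1 (ltr0n _ _) (y0 _) e2; by [].
have N9 : y vp = 0 -> y vt = 0 /\ y vt = 0.
  move=> h; have e1 : GsR vp y = 1%:R * y vt + (y vq + y vb + y vs + y vu + y vq) by rewrite /GsR /=; ring.
  have e2 : 0 <= (y vq + y vb + y vs + y vu + y vq) by nnt y0.
  have := nb_zero (Gz _ h) e1 (ltr0n _ _) (y0 _) e2; by [].
have N10 : y vp = 0 -> y vq = 0 /\ y vq = 0.
  move=> h; have e1 : GsR vp y = 2%:R * y vq + (y vt + y vb + y vs + y vu) by rewrite /GsR /=; ring.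
  have e2 : 0 <= (y vt + y vb + y vs + y vu) by nnt y0.
  have := nb_zero (Gz _ h) e1 (ltr0n _ _) (y0 _) e2; by [].
have N11 : y vp = 0 -> y vb = 0 /\ y vb = 0.
  move=> h; have e1 : GsR vp y = 1%:R * y vb + (y vt + y vq + y vs + y vu + y vq) by rewrite /GsR /=; ring.
  have e2 : 0 <= (y vt + y vq + y vs + y vu + y vq) by nnt y0.
  have := nb_zero (Gz _ h) e1 (ltr0n _ _) (y0 _) e2; by [].
have N12 : y vp = 0 -> y vs = 0 /\ y vs = 0.
  move=> h; have e1 : GsR vp y = 1%:R * y vs + (y vt + y vq + y vb + y vu + y vq) by rewrite /GsR /=; ring.
  have e2 : 0 <= (y vt + y vq + y vb + y vu + y vq) by nnt y0.
  have := nb_zero (Gz _ h) e1 (ltr0n _ _) (y0 _) e2; by [].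
have N13 : y vp = 0 -> y vu = 0 /\ y vu = 0.
  move=> h; have e1 : GsR vp y = 1%:R * y vu + (y vt + y vq + y vb + y vs + y vq) by rewrite /GsR /=; ring.
  have e2 : 0 <= (y vt + y vq + y vb + y vs + y vq) by nnt y0.
  have := nb_zero (Gz _ h) e1 (ltr0n _ _) (y0 _) e2; by [].
have N14 : y vq = 0 -> y vt = 0 /\ y vt = 0.
  move=> h; have e1 : GsR vq y = 1%:R * y vt + (y vp + y vb + y vr + y vu + y vp) by rewrite /GsR /=; ring.
  have e2 : 0 <= (y vp + y vb + y vr + y vu + y vp) by nnt y0.
  have := nb_zero (Gz _ h) e1 (ltr0n _ _) (y0 _) e2; by [].
have N15 : y vq = 0 -> y vp = 0 /\ y vp = 0.
  move=> h; have e1 : GsR vq y = 2%:R * y vp + (y vt + y vb + y vr + y vu) by rewrite /GsR /=; ring.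
  have e2 : 0 <= (y vt + y vb + y vr + y vu) by nnt y0.
  have := nb_zero (Gz _ h) e1 (ltr0n _ _) (y0 _) e2; by [].
have N16 : y vq = 0 -> y vb = 0 /\ y vb = 0.
  move=> h; have e1 : GsR vq y = 1%:R * y vb + (y vt + y vp + y vr + y vu + y vp) by rewrite /GsR /=; ring.
  have e2 : 0 <= (y vt + y vp + y vr + y vu + y vp) by nnt y0.
  have := nb_zero (Gz _ h) e1 (ltr0n _ _) (y0 _) e2; by [].
have N17 : y vq = 0 -> y vr = 0 /\ y vr = 0.
  move=> h; have e1 : GsR vq y = 1%:R * y vr + (y vt + y vp + y vb + y vu + y vp) by rewrite /GsR /=; ring.
  have e2 : 0 <= (y vt + y vp + y vb + y vu + y vp) by nnt y0.
  have := nb_zero (Gz _ h) e1 (ltr0n _ _) (y0 _) e2; by [].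
have N18 : y vq = 0 -> y vu = 0 /\ y vu = 0.
  move=> h; have e1 : GsR vq y = 1%:R * y vu + (y vt + y vp + y vb + y vr + y vp) by rewrite /GsR /=; ring.
  have e2 : 0 <= (y vt + y vp + y vb + y vr + y vp) by nnt y0.
  have := nb_zero (Gz _ h) e1 (ltr0n _ _) (y0 _) e2; by [].
have N19 : y vr = 0 -> y vt = 0 /\ y vt = 0.
  move=> h; have e1 : GsR vr y = 1%:R * y vt + (y vs + y vb + y vq) by rewrite /GsR /=; ring.
  have e2 : 0 <= (y vs + y vb + y vq) by nnt y0.
  have := nb_zero (Gz _ h) e1 (ltr0n _ _) (y0 _) e2; by [].
have N20 : y vr = 0 -> y vs = 0 /\ y vs = 0.
  move=> h; have e1 : GsR vr y = 1%:R * y vs + (y vt + y vb + y vq) by rewrite /GsR /=; ring.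
  have e2 : 0 <= (y vt + y vb + y vq) by nnt y0.
  have := nb_zero (Gz _ h) e1 (ltr0n _ _) (y0 _) e2; by [].
have N21 : y vr = 0 -> y vb = 0 /\ y vb = 0.
  move=> h; have e1 : GsR vr y = 1%:R * y vb + (y vt + y vs + y vq) by rewrite /GsR /=; ring.
  have e2 : 0 <= (y vt + y vs + y vq) by nnt y0.
  have := nb_zero (Gz _ h) e1 (ltr0n _ _) (y0 _) e2; by [].
have N22 : y vr = 0 -> y vq = 0 /\ y vq = 0.
  move=> h; have e1 : GsR vr y = 1%:R * y vq + (y vt + y vs + y vb) by rewrite /GsR /=; ring.
  have e2 : 0 <= (y vt + y vs + y vb) by nnt y0.
  have := nb_zero (Gz _ h) e1 (ltr0n _ _) (y0 _) e2; by [].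
have N23 : y vs = 0 -> y vt = 0 /\ y vt = 0.
  move=> h; have e1 : GsR vs y = 1%:R * y vt + (y vr + y vb + y vp) by rewrite /GsR /=; ring.
  have e2 : 0 <= (y vr + y vb + y vp) by nnt y0.
  have := nb_zero (Gz _ h) e1 (ltr0n _ _) (y0 _) e2; by [].
have N24 : y vs = 0 -> y vr = 0 /\ y vr = 0.
  move=> h; have e1 : GsR vs y = 1%:R * y vr + (y vt + y vb + y vp) by rewrite /GsR /=; ring.
  have e2 : 0 <= (y vt + y vb + y vp) by nnt y0.
  have := nb_zero (Gz _ h) e1 (ltr0n _ _) (y0 _) e2; by [].
have N25 : y vs = 0 -> y vb = 0 /\ y vb = 0.
  move=> h; have e1 : GsR vs y = 1%:R * y vb + (y vt + y vr + y vp) by rewrite /GsR /=; ring.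
  have e2 : 0 <= (y vt + y vr + y vp) by nnt y0.
  have := nb_zero (Gz _ h) e1 (ltr0n _ _) (y0 _) e2; by [].
have N26 : y vs = 0 -> y vp = 0 /\ y vp = 0.
  move=> h; have e1 : GsR vs y = 1%:R * y vp + (y vt + y vr + y vb) by rewrite /GsR /=; ring.
  have e2 : 0 <= (y vt + y vr + y vb) by nnt y0.
  have := nb_zero (Gz _ h) e1 (ltr0n _ _) (y0 _) e2; by [].
have N27 : y vu = 0 -> y vp = 0 /\ y vp = 0.
  move=> h; have e1 : GsR vu y = 1%:R * y vp + (y vq) by rewrite /GsR /=; ring.
  have e2 : 0 <= (y vq) by nnt y0.
  have := nb_zero (Gz _ h) e1 (ltr0n _ _) (y0 _) e2; by [].
have N28 : y vu = 0 -> y vq = 0 /\ y vq = 0.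
  move=> h; have e1 : GsR vu y = 1%:R * y vq + (y vp) by rewrite /GsR /=; ring.
  have e2 : 0 <= (y vp) by nnt y0.
  have := nb_zero (Gz _ h) e1 (ltr0n _ _) (y0 _) e2; by [].
have allz : forall i, y i = 0 -> False.
  apply: ord7P => h0.
  - have [h1b h1c] := N1 h0.
    have [h2b h2c] := N2 h0.
    have [h3b h3c] := N3 h0.
    have [h4b h4c] := N4 h0.
    have [h5b h5c] := N11 h1b.
    have [h6b h6c] := N13 h1b.
    by apply: (@allzero_contra _ 2 y isT y1); apply: ord7P.
  - have [h1b h1c] := N5 h0.
    have [h2b h2c] := N6 h0.
    have [h3b h3c] := N7 h0.
    have [h4b h4c] := N8 h0.
    have [h5b h5c] := N14 h1b.
    have [h6b h6c] := N18 h1b.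
    by apply: (@allzero_contra _ 2 y isT y1); apply: ord7P.
  - have [h1b h1c] := N9 h0.
    have [h2b h2c] := N10 h0.
    have [h3b h3c] := N11 h0.
    have [h4b h4c] := N12 h0.
    have [h5b h5c] := N13 h0.
    have [h6b h6c] := N3 h1b.
    by apply: (@allzero_contra _ 2 y isT y1); apply: ord7P.
  - have [h1b h1c] := N14 h0.
    have [h2b h2c] := N15 h0.
    have [h3b h3c] := N16 h0.
    have [h4b h4c] := N17 h0.
    have [h5b h5c] := N18 h0.
    have [h6b h6c] := N4 h1b.
    by apply: (@allzero_contra _ 2 y isT y1); apply: ord7P.
  - have [h1b h1c] := N19 h0.
    have [h2b h2c] := N20 h0.
    have [h3b h3c] := N21 h0.
    have [h4b h4c] := N22 h0.
    have [h5b h5c] := N1 h1b.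
    have [h6b h6c] := N18 h4b.
    by apply: (@allzero_contra _ 2 y isT y1); apply: ord7P.
  - have [h1b h1c] := N23 h0.
    have [h2b h2c] := N24 h0.
    have [h3b h3c] := N25 h0.
    have [h4b h4c] := N26 h0.
    have [h5b h5c] := N2 h1b.
    have [h6b h6c] := N13 h4b.
    by apply: (@allzero_contra _ 2 y isT y1); apply: ord7P.
  - have [h1b h1c] := N27 h0.
    have [h2b h2c] := N28 h0.
    have [h3b h3c] := N9 h1b.
    have [h4b h4c] := N11 h1b.
    have [h5b h5c] := N12 h1b.
    have [h6b h6c] := N17 h2b.
    by apply: (@allzero_contra _ 2 y isT y1); apply: ord7P.
by move=> i; rewrite lt_def y0 andbT; apply/negP => /eqP /allz.
Qed.

Lemma sexsR : exists z : 'I_7 -> R, is_shadow_pev O_R z.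
Proof. exact: (shadow_exists (@sgR) cqR (@qhR) (@qpR) (@qnnR) (@posSR)). Qed.

Lemma srankR (z : 'I_7 -> R) : is_shadow_pev O_R z -> z vt = z vb.
Proof.
move=> [zp [z1 [lam hl]]].
have et := hl vt; have eb := hl vb; rewrite sgR in et; rewrite sgR in eb.
have e : GsR vt z = GsR vb z by rewrite /GsR /=; ring.
have lp : 0 < lam * z vt.
  rewrite -et /GsR /=; have := zp vp; have := zp vq; have := zp vr; have := zp vs; lra.
have l0 : lam != 0 by apply/negP => /eqP l0; move: lp; rewrite l0 mul0r ltxx.
by apply: (mulfI l0); rewrite -et -eb.
Qed.

Definition qB (z : 'I_7 -> R) : R := z vt * z vp + z vt * z vr + z vp * z vr + z vt * z vp + z vt * z vs + z vp * z vs + z vb * z vp + z vb * z vq + z vp * z vq + z vb * z vr + z vb * z vs + z vr * z vs + z vu * z vp + z vu * z vq + z vp * z vq.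
Definition GsB (i : 'I_7) (z : 'I_7 -> R) : R := nth 0 [:: (z vp + z vr + z vp + z vs); (z vp + z vq + z vr + z vs); (z vt + z vr + z vt + z vs + z vb + z vq + z vu + z vq); (z vb + z vp + z vu + z vp); (z vt + z vp + z vb + z vs); (z vt + z vp + z vb + z vr); (z vp + z vq)] i.

Lemma sgB i (z : 'I_7 -> R) : \sum_j shadow_mult R O_B i j * z j = GsB i z.
Proof. by move: i; apply: ord7P; rewrite sum7 /shadow_mult /O_B /= !inE /= /GsB /=; ring. Qed.

Lemma cqB : continuous (fun v : 'rV[R]_7 => qB (fun i => v ord0 i)).
Proof. rewrite /qB; contt. Qed.

Lemma qhB c z : qB (sc c z) = c ^+ 2 * qB z.
Proof. rewrite /qB /sc; ring. Qed.

Lemma qpB y i e : qB (pert y i e) = qB y + e * GsB i y.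
Proof. by move: i; apply: ord7P; rewrite /qB /GsB /pert /=; ring. Qed.

Lemma qnnB z : (forall i, 0 <= z i) -> 0 <= qB z.
Proof. move=> z0; rewrite /qB; nnt z0. Qed.

Lemma posSB y : (forall i, 0 <= y i) -> \sum_i y i ^+ 2 = 1 ->
  (forall i, GsB i y <= 2%:R * qB y * y i) -> forall i, 0 < y i.
Proof.
move=> y0 y1 hG.
have Gz : forall i, y i = 0 -> GsB i y <= 0.
  by move=> i yi; have := hG i; rewrite yi mulr0.
have N1 : y vt = 0 -> y vp = 0 /\ y vp = 0.
  move=> h; have e1 : GsB vt y = 2%:R * y vp + (y vr + y vs) by rewrite /GsB /=; ring.
  have e2 : 0 <= (y vr + y vs) by nnt y0.
  have := nb_zero (Gz _ h) e1 (ltr0n _ _) (y0 _) e2; by [].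
have N2 : y vt = 0 -> y vr = 0 /\ y vr = 0.
  move=> h; have e1 : GsB vt y = 1%:R * y vr + (y vp + y vp + y vs) by rewrite /GsB /=; ring.
  have e2 : 0 <= (y vp + y vp + y vs) by nnt y0.
  have := nb_zero (Gz _ h) e1 (ltr0n _ _) (y0 _) e2; by [].
have N3 : y vt = 0 -> y vs = 0 /\ y vs = 0.
  move=> h; have e1 : GsB vt y = 1%:R * y vs + (y vp + y vr + y vp) by rewrite /GsB /=; ring.
  have e2 : 0 <= (y vp + y vr + y vp) by nnt y0.
  have := nb_zero (Gz _ h) e1 (ltr0n _ _) (y0 _) e2; by [].
have N4 : y vb = 0 -> y vp = 0 /\ y vp = 0.
  move=> h; have e1 : GsB vb y = 1%:R * y vp + (y vq + y vr + y vs) by rewrite /GsB /=; ring.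
  have e2 : 0 <= (y vq + y vr + y vs) by nnt y0.
  have := nb_zero (Gz _ h) e1 (ltr0n _ _) (y0 _) e2; by [].
have N5 : y vb = 0 -> y vq = 0 /\ y vq = 0.
  move=> h; have e1 : GsB vb y = 1%:R * y vq + (y vp + y vr + y vs) by rewrite /GsB /=; ring.
  have e2 : 0 <= (y vp + y vr + y vs) by nnt y0.
  have := nb_zero (Gz _ h) e1 (ltr0n _ _) (y0 _) e2; by [].
have N6 : y vb = 0 -> y vr = 0 /\ y vr = 0.
  move=> h; have e1 : GsB vb y = 1%:R * y vr + (y vp + y vq + y vs) by rewrite /GsB /=; ring.
  have e2 : 0 <= (y vp + y vq + y vs) by nnt y0.
  have := nb_zero (Gz _ h) e1 (ltr0n _ _) (y0 _) e2; by [].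
have N7 : y vb = 0 -> y vs = 0 /\ y vs = 0.
  move=> h; have e1 : GsB vb y = 1%:R * y vs + (y vp + y vq + y vr) by rewrite /GsB /=; ring.
  have e2 : 0 <= (y vp + y vq + y vr) by nnt y0.
  have := nb_zero (Gz _ h) e1 (ltr0n _ _) (y0 _) e2; by [].
have N8 : y vp = 0 -> y vt = 0 /\ y vt = 0.
  move=> h; have e1 : GsB vp y = 2%:R * y vt + (y vr + y vs + y vb + y vq + y vu + y vq) by rewrite /GsB /=; ring.
  have e2 : 0 <= (y vr + y vs + y vb + y vq + y vu + y vq) by nnt y0.
  have := nb_zero (Gz _ h) e1 (ltr0n _ _) (y0 _) e2; by [].
have N9 : y vp = 0 -> y vr = 0 /\ y vr = 0.
  move=> h; have e1 : GsB vp y = 1%:R * y vr + (y vt + y vt + y vs + y vb + y vq + y vu + y vq) by rewrite /GsB /=; ring.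
  have e2 : 0 <= (y vt + y vt + y vs + y vb + y vq + y vu + y vq) by nnt y0.
  have := nb_zero (Gz _ h) e1 (ltr0n _ _) (y0 _) e2; by [].
have N10 : y vp = 0 -> y vs = 0 /\ y vs = 0.
  move=> h; have e1 : GsB vp y = 1%:R * y vs + (y vt + y vr + y vt + y vb + y vq + y vu + y vq) by rewrite /GsB /=; ring.
  have e2 : 0 <= (y vt + y vr + y vt + y vb + y vq + y vu + y vq) by nnt y0.
  have := nb_zero (Gz _ h) e1 (ltr0n _ _) (y0 _) e2; by [].
have N11 : y vp = 0 -> y vb = 0 /\ y vb = 0.
  move=> h; have e1 : GsB vp y = 1%:R * y vb + (y vt + y vr + y vt + y vs + y vq + y vu + y vq) by rewrite /GsB /=; ring.
  have e2 : 0 <= (y vt + y vr + y vt + y vs + y vq + y vu + y vq) by nnt y0.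
  have := nb_zero (Gz _ h) e1 (ltr0n _ _) (y0 _) e2; by [].
have N12 : y vp = 0 -> y vq = 0 /\ y vq = 0.
  move=> h; have e1 : GsB vp y = 2%:R * y vq + (y vt + y vr + y vt + y vs + y vb + y vu) by rewrite /GsB /=; ring.
  have e2 : 0 <= (y vt + y vr + y vt + y vs + y vb + y vu) by nnt y0.
  have := nb_zero (Gz _ h) e1 (ltr0n _ _) (y0 _) e2; by [].
have N13 : y vp = 0 -> y vu = 0 /\ y vu = 0.
  move=> h; have e1 : GsB vp y = 1%:R * y vu + (y vt + y vr + y vt + y vs + y vb + y vq + y vq) by rewrite /GsB /=; ring.
  have e2 : 0 <= (y vt + y vr + y vt + y vs + y vb + y vq + y vq) by nnt y0.
  have := nb_zero (Gz _ h) e1 (ltr0n _ _) (y0 _) e2; by [].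
have N14 : y vq = 0 -> y vb = 0 /\ y vb = 0.
  move=> h; have e1 : GsB vq y = 1%:R * y vb + (y vp + y vu + y vp) by rewrite /GsB /=; ring.
  have e2 : 0 <= (y vp + y vu + y vp) by nnt y0.
  have := nb_zero (Gz _ h) e1 (ltr0n _ _) (y0 _) e2; by [].
have N15 : y vq = 0 -> y vp = 0 /\ y vp = 0.
  move=> h; have e1 : GsB vq y = 2%:R * y vp + (y vb + y vu) by rewrite /GsB /=; ring.
  have e2 : 0 <= (y vb + y vu) by nnt y0.
  have := nb_zero (Gz _ h) e1 (ltr0n _ _) (y0 _) e2; by [].
have N16 : y vq = 0 -> y vu = 0 /\ y vu = 0.
  move=> h; have e1 : GsB vq y = 1%:R * y vu + (y vb + y vp + y vp) by rewrite /GsB /=; ring.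
  have e2 : 0 <= (y vb + y vp + y vp) by nnt y0.
  have := nb_zero (Gz _ h) e1 (ltr0n _ _) (y0 _) e2; by [].
have N17 : y vr = 0 -> y vt = 0 /\ y vt = 0.
  move=> h; have e1 : GsB vr y = 1%:R * y vt + (y vp + y vb + y vs) by rewrite /GsB /=; ring.
  have e2 : 0 <= (y vp + y vb + y vs) by nnt y0.
  have := nb_zero (Gz _ h) e1 (ltr0n _ _) (y0 _) e2; by [].
have N18 : y vr = 0 -> y vp = 0 /\ y vp = 0.
  move=> h; have e1 : GsB vr y = 1%:R * y vp + (y vt + y vb + y vs) by rewrite /GsB /=; ring.
  have e2 : 0 <= (y vt + y vb + y vs) by nnt y0.
  have := nb_zero (Gz _ h) e1 (ltr0n _ _) (y0 _) e2; by [].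
have N19 : y vr = 0 -> y vb = 0 /\ y vb = 0.
  move=> h; have e1 : GsB vr y = 1%:R * y vb + (y vt + y vp + y vs) by rewrite /GsB /=; ring.
  have e2 : 0 <= (y vt + y vp + y vs) by nnt y0.
  have := nb_zero (Gz _ h) e1 (ltr0n _ _) (y0 _) e2; by [].
have N20 : y vr = 0 -> y vs = 0 /\ y vs = 0.
  move=> h; have e1 : GsB vr y = 1%:R * y vs + (y vt + y vp + y vb) by rewrite /GsB /=; ring.
  have e2 : 0 <= (y vt + y vp + y vb) by nnt y0.
  have := nb_zero (Gz _ h) e1 (ltr0n _ _) (y0 _) e2; by [].
have N21 : y vs = 0 -> y vt = 0 /\ y vt = 0.
  move=> h; have e1 : GsB vs y = 1%:R * y vt + (y vp + y vb + y vr) by rewrite /GsB /=; ring.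
  have e2 : 0 <= (y vp + y vb + y vr) by nnt y0.
  have := nb_zero (Gz _ h) e1 (ltr0n _ _) (y0 _) e2; by [].
have N22 : y vs = 0 -> y vp = 0 /\ y vp = 0.
  move=> h; have e1 : GsB vs y = 1%:R * y vp + (y vt + y vb + y vr) by rewrite /GsB /=; ring.
  have e2 : 0 <= (y vt + y vb + y vr) by nnt y0.
  have := nb_zero (Gz _ h) e1 (ltr0n _ _) (y0 _) e2; by [].
have N23 : y vs = 0 -> y vb = 0 /\ y vb = 0.
  move=> h; have e1 : GsB vs y = 1%:R * y vb + (y vt + y vp + y vr) by rewrite /GsB /=; ring.
  have e2 : 0 <= (y vt + y vp + y vr) by nnt y0.
  have := nb_zero (Gz _ h) e1 (ltr0n _ _) (y0 _) e2; by [].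
have N24 : y vs = 0 -> y vr = 0 /\ y vr = 0.
  move=> h; have e1 : GsB vs y = 1%:R * y vr + (y vt + y vp + y vb) by rewrite /GsB /=; ring.
  have e2 : 0 <= (y vt + y vp + y vb) by nnt y0.
  have := nb_zero (Gz _ h) e1 (ltr0n _ _) (y0 _) e2; by [].
have N25 : y vu = 0 -> y vp = 0 /\ y vp = 0.
  move=> h; have e1 : GsB vu y = 1%:R * y vp + (y vq) by rewrite /GsB /=; ring.
  have e2 : 0 <= (y vq) by nnt y0.
  have := nb_zero (Gz _ h) e1 (ltr0n _ _) (y0 _) e2; by [].
have N26 : y vu = 0 -> y vq = 0 /\ y vq = 0.
  move=> h; have e1 : GsB vu y = 1%:R * y vq + (y vp) by rewrite /GsB /=; ring.
  have e2 : 0 <= (y vp) by nnt y0.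
  have := nb_zero (Gz _ h) e1 (ltr0n _ _) (y0 _) e2; by [].
have allz : forall i, y i = 0 -> False.
  apply: ord7P => h0.
  - have [h1b h1c] := N1 h0.
    have [h2b h2c] := N2 h0.
    have [h3b h3c] := N3 h0.
    have [h4b h4c] := N11 h1b.
    have [h5b h5c] := N12 h1b.
    have [h6b h6c] := N13 h1b.
    by apply: (@allzero_contra _ 2 y isT y1); apply: ord7P.
  - have [h1b h1c] := N4 h0.
    have [h2b h2c] := N5 h0.
    have [h3b h3c] := N6 h0.
    have [h4b h4c] := N7 h0.
    have [h5b h5c] := N8 h1b.
    have [h6b h6c] := N13 h1b.
    by apply: (@allzero_contra _ 2 y isT y1); apply: ord7P.
  - have [h1b h1c] := N8 h0.
    have [h2b h2c] := N9 h0.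
    have [h3b h3c] := N10 h0.
    have [h4b h4c] := N11 h0.
    have [h5b h5c] := N12 h0.
    have [h6b h6c] := N13 h0.
    by apply: (@allzero_contra _ 2 y isT y1); apply: ord7P.
  - have [h1b h1c] := N14 h0.
    have [h2b h2c] := N15 h0.
    have [h3b h3c] := N16 h0.
    have [h4b h4c] := N6 h1b.
    have [h5b h5c] := N7 h1b.
    have [h6b h6c] := N8 h2b.
    by apply: (@allzero_contra _ 2 y isT y1); apply: ord7P.
  - have [h1b h1c] := N17 h0.
    have [h2b h2c] := N18 h0.
    have [h3b h3c] := N19 h0.
    have [h4b h4c] := N20 h0.
    have [h5b h5c] := N12 h2b.
    have [h6b h6c] := N13 h2b.
    by apply: (@allzero_contra _ 2 y isT y1); apply: ord7P.
  - have [h1b h1c] := N21 h0.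
    have [h2b h2c] := N22 h0.
    have [h3b h3c] := N23 h0.
    have [h4b h4c] := N24 h0.
    have [h5b h5c] := N12 h2b.
    have [h6b h6c] := N13 h2b.
    by apply: (@allzero_contra _ 2 y isT y1); apply: ord7P.
  - have [h1b h1c] := N25 h0.
    have [h2b h2c] := N26 h0.
    have [h3b h3c] := N8 h1b.
    have [h4b h4c] := N9 h1b.
    have [h5b h5c] := N10 h1b.
    have [h6b h6c] := N11 h1b.
    by apply: (@allzero_contra _ 2 y isT y1); apply: ord7P.
by move=> i; rewrite lt_def y0 andbT; apply/negP => /eqP /allz.
Qed.

Lemma sexsB : exists z : 'I_7 -> R, is_shadow_pev O_B z.
Proof. exact: (shadow_exists (@sgB) cqB (@qhB) (@qpB) (@qnnB) (@posSB)). Qed.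

Definition xsB : 'I_7 -> R := fun i => nth 0 [:: (67 * 100 + 73); (59 * 100 + 71); ((1 * 100 + 0) * 100 + 0); (61 * 100 + 91); (60 * 100 + 72); (60 * 100 + 72); (34 * 100 + 12)] i.

Lemma srankB (z : 'I_7 -> R) : is_shadow_pev O_B z -> z vr < z vq.
Proof.
move=> [zp [z1 [lam hl]]].
have z0 : forall i, 0 <= z i by move=> i; exact: ltW.
have ei : forall i, GsB i z = lam * z i by move=> i; rewrite -sgB hl.
have x0 : forall i, 0 < xsB i by apply: ord7P; rewrite /xsB /=; lra.
have Lr : (((4 * 100 + 74) * 100 + 53) / 10000 : R) <= lam.
  have sym : xsB vt * GsB vt z + xsB vb * GsB vb z + xsB vp * GsB vp z + xsB vq * GsB vq z + xsB vr * GsB vr z + xsB vs * GsB vs z + xsB vu * GsB vu z = z vt * GsB vt xsB + z vb * GsB vb xsB + z vp * GsB vp xsB + z vq * GsB vq xsB + z vr * GsB vr xsB + z vs * GsB vs xsB + z vu * GsB vu xsB by rewrite /GsB /=; ring.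
  rewrite !ei in sym.
  have S0 : 0 < xsB vt * z vt + xsB vb * z vb + xsB vp * z vp + xsB vq * z vq + xsB vr * z vr + xsB vs * z vs + xsB vu * z vu.
    move: (zp vt) (zp vb) (zp vp) (zp vq) (zp vr) (zp vs) (zp vu); rewrite /xsB /= => *; lra.
  have e2 : (lam - (((4 * 100 + 74) * 100 + 53) / 10000 : R)) * (xsB vt * z vt + xsB vb * z vb + xsB vp * z vp + xsB vq * z vq + xsB vr * z vr + xsB vs * z vs + xsB vu * z vu) = (xsB vt * (lam * z vt) + xsB vb * (lam * z vb) + xsB vp * (lam * z vp) + xsB vq * (lam * z vq) + xsB vr * (lam * z vr) + xsB vs * (lam * z vs) + xsB vu * (lam * z vu)) - (((4 * 100 + 74) * 100 + 53) / 10000 : R) * (xsB vt * z vt + xsB vb * z vb + xsB vp * z vp + xsB vq * z vq + xsB vr * z vr + xsB vs * z vs + xsB vu * z vu) by ring.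
  have h2 : 0 <= (lam - (((4 * 100 + 74) * 100 + 53) / 10000 : R)) * (xsB vt * z vt + xsB vb * z vb + xsB vp * z vp + xsB vq * z vq + xsB vr * z vr + xsB vs * z vs + xsB vu * z vu).
    rewrite e2 sym; move: (zp vt) (zp vb) (zp vp) (zp vq) (zp vr) (zp vs) (zp vu); rewrite /GsB /xsB /= => *; lra.
  by rewrite pmulr_lge0 // subr_ge0 in h2.
have L0 : 0 <= (((4 * 100 + 74) * 100 + 53) / 10000 : R) by lra.
have [m hm] := argmax7 (fun i => z i / xsB i).
have key : forall m M, 0 < M -> (forall j, z j <= M * xsB j) -> z m = M * xsB m ->
    z vr < z vq.
  apply: ord7P => M M0 yle ym.
  - have b0 : M * xsB vt <= z vt by rewrite ym.
    have b1 : M * ((99 * 100 + 97) : R) <= z vp.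
      have OT : (2 : R) * (M * xsB vp - z vp) <= M * GsB vt xsB - GsB vt z.
        move: (yle vp) (yle vr) (yle vs); rewrite /GsB /xsB /= => *; lra.
      have NU : (2 : R) * ((99 * 100 + 97) : R) + GsB vt xsB - (((4 * 100 + 74) * 100 + 53) / 10000 : R) * xsB vt <= (2 : R) * xsB vp.
        rewrite /GsB /xsB /=; lra.
      have BM : 0 <= xsB vt by exact: ltW (x0 vt).
      have A0 : 0 < (2 : R) by lra.
      exact: (sstep M0 A0 BM b0 Lr L0 (ei vt) OT NU).
    have b2 : M * ((61 * 100 + 82) : R) <= z vq.
      have OT : (2 : R) * (M * xsB vq - z vq) <= M * GsB vp xsB - GsB vp z.
        move: (yle vt) (yle vr) (yle vs) (yle vb) (yle vq) (yle vu); rewrite /GsB /xsB /= => *; lra.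
      have NU : (2 : R) * ((61 * 100 + 82) : R) + GsB vp xsB - (((4 * 100 + 74) * 100 + 53) / 10000 : R) * ((99 * 100 + 97) : R) <= (2 : R) * xsB vq.
        rewrite /GsB /xsB /=; lra.
      have BM : 0 <= ((99 * 100 + 97) : R) by lra.
      have A0 : 0 < (2 : R) by lra.
      exact: (sstep M0 A0 BM b1 Lr L0 (ei vp) OT NU).
    have NB : M * xsB vr < M * ((61 * 100 + 82) : R) by rewrite ltr_pM2l // /xsB /=; lra.
    exact: (le_lt_trans (yle vr) (lt_le_trans NB b2)).
  - have b0 : M * xsB vb <= z vb by rewrite ym.
    have b1 : M * ((61 * 100 + 90) : R) <= z vq.
      have OT : (1 : R) * (M * xsB vq - z vq) <= M * GsB vb xsB - GsB vb z.
        move: (yle vp) (yle vq) (yle vr) (yle vs); rewrite /GsB /xsB /= => *; lra.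
      have NU : (1 : R) * ((61 * 100 + 90) : R) + GsB vb xsB - (((4 * 100 + 74) * 100 + 53) / 10000 : R) * xsB vb <= (1 : R) * xsB vq.
        rewrite /GsB /xsB /=; lra.
      have BM : 0 <= xsB vb by exact: ltW (x0 vb).
      have A0 : 0 < (1 : R) by lra.
      exact: (sstep M0 A0 BM b0 Lr L0 (ei vb) OT NU).
    have NB : M * xsB vr < M * ((61 * 100 + 90) : R) by rewrite ltr_pM2l // /xsB /=; lra.
    exact: (le_lt_trans (yle vr) (lt_le_trans NB b1)).
  - have b0 : M * xsB vp <= z vp by rewrite ym.
    have b1 : M * ((61 * 100 + 90) : R) <= z vq.
      have OT : (2 : R) * (M * xsB vq - z vq) <= M * GsB vp xsB - GsB vp z.
        move: (yle vt) (yle vr) (yle vs) (yle vb) (yle vq) (yle vu); rewrite /GsB /xsB /= => *; lra.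
      have NU : (2 : R) * ((61 * 100 + 90) : R) + GsB vp xsB - (((4 * 100 + 74) * 100 + 53) / 10000 : R) * xsB vp <= (2 : R) * xsB vq.
        rewrite /GsB /xsB /=; lra.
      have BM : 0 <= xsB vp by exact: ltW (x0 vp).
      have A0 : 0 < (2 : R) by lra.
      exact: (sstep M0 A0 BM b0 Lr L0 (ei vp) OT NU).
    have NB : M * xsB vr < M * ((61 * 100 + 90) : R) by rewrite ltr_pM2l // /xsB /=; lra.
    exact: (le_lt_trans (yle vr) (lt_le_trans NB b1)).
  - have b0 : M * xsB vq <= z vq by rewrite ym.
    have NB : M * xsB vr < M * xsB vq by rewrite ltr_pM2l // /xsB /=; lra.
    exact: (le_lt_trans (yle vr) (lt_le_trans NB b0)).
  - have b0 : M * xsB vr <= z vr by rewrite ym.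
    have b1 : M * ((99 * 100 + 97) : R) <= z vp.
      have OT : (1 : R) * (M * xsB vp - z vp) <= M * GsB vr xsB - GsB vr z.
        move: (yle vt) (yle vp) (yle vb) (yle vs); rewrite /GsB /xsB /= => *; lra.
      have NU : (1 : R) * ((99 * 100 + 97) : R) + GsB vr xsB - (((4 * 100 + 74) * 100 + 53) / 10000 : R) * xsB vr <= (1 : R) * xsB vp.
        rewrite /GsB /xsB /=; lra.
      have BM : 0 <= xsB vr by exact: ltW (x0 vr).
      have A0 : 0 < (1 : R) by lra.
      exact: (sstep M0 A0 BM b0 Lr L0 (ei vr) OT NU).
    have b2 : M * ((61 * 100 + 82) : R) <= z vq.
      have OT : (2 : R) * (M * xsB vq - z vq) <= M * GsB vp xsB - GsB vp z.
        move: (yle vt) (yle vr) (yle vs) (yle vb) (yle vq) (yle vu); rewrite /GsB /xsB /= => *; lra.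
      have NU : (2 : R) * ((61 * 100 + 82) : R) + GsB vp xsB - (((4 * 100 + 74) * 100 + 53) / 10000 : R) * ((99 * 100 + 97) : R) <= (2 : R) * xsB vq.
        rewrite /GsB /xsB /=; lra.
      have BM : 0 <= ((99 * 100 + 97) : R) by lra.
      have A0 : 0 < (2 : R) by lra.
      exact: (sstep M0 A0 BM b1 Lr L0 (ei vp) OT NU).
    have NB : M * xsB vr < M * ((61 * 100 + 82) : R) by rewrite ltr_pM2l // /xsB /=; lra.
    exact: (le_lt_trans (yle vr) (lt_le_trans NB b2)).
  - have b0 : M * xsB vs <= z vs by rewrite ym.
    have b1 : M * ((99 * 100 + 97) : R) <= z vp.
      have OT : (1 : R) * (M * xsB vp - z vp) <= M * GsB vs xsB - GsB vs z.
        move: (yle vt) (yle vp) (yle vb) (yle vr); rewrite /GsB /xsB /= => *; lra.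
      have NU : (1 : R) * ((99 * 100 + 97) : R) + GsB vs xsB - (((4 * 100 + 74) * 100 + 53) / 10000 : R) * xsB vs <= (1 : R) * xsB vp.
        rewrite /GsB /xsB /=; lra.
      have BM : 0 <= xsB vs by exact: ltW (x0 vs).
      have A0 : 0 < (1 : R) by lra.
      exact: (sstep M0 A0 BM b0 Lr L0 (ei vs) OT NU).
    have b2 : M * ((61 * 100 + 82) : R) <= z vq.
      have OT : (2 : R) * (M * xsB vq - z vq) <= M * GsB vp xsB - GsB vp z.
        move: (yle vt) (yle vr) (yle vs) (yle vb) (yle vq) (yle vu); rewrite /GsB /xsB /= => *; lra.
      have NU : (2 : R) * ((61 * 100 + 82) : R) + GsB vp xsB - (((4 * 100 + 74) * 100 + 53) / 10000 : R) * ((99 * 100 + 97) : R) <= (2 : R) * xsB vq.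
        rewrite /GsB /xsB /=; lra.
      have BM : 0 <= ((99 * 100 + 97) : R) by lra.
      have A0 : 0 < (2 : R) by lra.
      exact: (sstep M0 A0 BM b1 Lr L0 (ei vp) OT NU).
    have NB : M * xsB vr < M * ((61 * 100 + 82) : R) by rewrite ltr_pM2l // /xsB /=; lra.
    exact: (le_lt_trans (yle vr) (lt_le_trans NB b2)).
  - have b0 : M * xsB vu <= z vu by rewrite ym.
    have b1 : M * ((61 * 100 + 90) : R) <= z vq.
      have OT : (1 : R) * (M * xsB vq - z vq) <= M * GsB vu xsB - GsB vu z.
        move: (yle vp) (yle vq); rewrite /GsB /xsB /= => *; lra.
      have NU : (1 : R) * ((61 * 100 + 90) : R) + GsB vu xsB - (((4 * 100 + 74) * 100 + 53) / 10000 : R) * xsB vu <= (1 : R) * xsB vq.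
        rewrite /GsB /xsB /=; lra.
      have BM : 0 <= xsB vu by exact: ltW (x0 vu).
      have A0 : 0 < (1 : R) by lra.
      exact: (sstep M0 A0 BM b0 Lr L0 (ei vu) OT NU).
    have NB : M * xsB vr < M * ((61 * 100 + 90) : R) by rewrite ltr_pM2l // /xsB /=; lra.
    exact: (le_lt_trans (yle vr) (lt_le_trans NB b1)).
have M0 : 0 < z m / xsB m by rewrite divr_gt0.
apply: (key m (z m / xsB m) M0).
  move=> j; rewrite -ler_pdivrMr //; exact: hm.
by rewrite divfK // gt_eqF.
Qed.

End Inst.

Local Close Scope ring_scope.
Local Close Scope classical_set_scope.

Theorem theorem5p1 (R : realType) :
  opaque R 3 O_R /\ opaque R 3 O_B.
Proof.
split.
- split; first exact: hexR.
  split; first exact: sexsR.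
  move=> y z hy hz hsr.
  have h1 := rankR hy; have h2 := srankR hz.
  by move: (hsr vt vb); rewrite h2 lexx leNgt h1.
- split; first exact: hexB.
  split; first exact: sexsB.
  move=> y z hy hz hsr.
  have h1 := rankB hy; have h2 := srankB hz.
  by move: (hsr vq vr); rewrite (ltW h1) leNgt h2.
Qed.
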